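(* There is a computable equivalence structure that is computably bi-embeddably categorical but not computably categorical.
   Context: An equivalence structure $\mathcal{A}=(A,E)$ has universe $A\subseteq\omega$ and an equivalence relation $E$ on $A$; it is computable if its atomic diagram is computable. Two structures are bi-embeddable if each embeds into the other. A computable structure $\mathcal{A}$ is computably bi-embeddably categorical if every computable structure bi-embeddable with $\mathcal{A}$ is bi-embeddable with $\mathcal{A}$ via computable embeddings in both directions. A computable structure $\mathcal{A}$ is computably categorical if for every computable structure $\mathcal{B}$ isomorphic to $\mathcal{A}$ there is a computable isomorphism from $\mathcal{B}$ to $\mathcal{A}$. *)

(* Defs.v *)
From Stdlib Require Import List Arith.
Import ListNotations.

Inductive prog : Type :=
| PZero : prog
| PSucc : prog
| PProj : nat -> prog
| PComp : prog -> list prog -> prog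
| PPrim : prog -> prog -> prog
| PMu   : prog -> prog.

Inductive eval : prog -> list nat -> nat -> Prop :=
| ev_zero xs : eval PZero xs 0
| ev_succ x xs : eval PSucc (x :: xs) (S x)
| ev_proj i xs y : nth_error xs i = Some y -> eval (PProj i) xs y
| ev_comp f gs xs ys y :
    evals gs xs ys -> eval f ys y -> eval (PComp f gs) xs y
| ev_prim0 f g xs y : eval f xs y -> eval (PPrim f g) (0 :: xs) y
| ev_primS f g n xs r y :
    eval (PPrim f g) (n :: xs) r -> eval g (n :: r :: xs) y ->
    eval (PPrim f g) (S n :: xs) y
| ev_mu f xs n :
    eval f (n :: xs) 0 ->
    (forall m, m < n -> exists k, eval f (m :: xs) (S k)) ->
    eval (PMu f) xs n
with evals : list prog -> list nat -> list nat -> Prop :=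
| evs_nil xs : evals [] xs []
| evs_cons g gs xs y ys :
    eval g xs y -> evals gs xs ys -> evals (g :: gs) xs (y :: ys).

Definition computable_fun (f : nat -> nat) : Prop :=
  exists p, forall x, eval p [x] (f x).

Definition computable_set (A : nat -> Prop) : Prop :=
  exists p, forall x, (A x -> eval p [x] 1) /\ (~ A x -> eval p [x] 0).

Definition computable_rel (R : nat -> nat -> Prop) : Prop :=
  exists p, forall x y, (R x y -> eval p [x; y] 1) /\ (~ R x y -> eval p [x; y] 0).

Record structure : Type := mkStructure {
  univ : nat -> Prop;
  E : nat -> nat -> Prop;
  E_in_univ : forall x y, E x y -> univ x /\ univ y
}.

Definition is_equivalence_structure (S : structure) : Prop :=
  (forall x, univ S x -> E S x x) /\
  (forall x y, E S x y -> E S y x) /\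
  (forall x y z, E S x y -> E S y z -> E S x z).

(** Computable structure: its atomic diagram (universe, equality, E) is
    computable; equality on nat is always decidable. *)
Definition computable_structure (S : structure) : Prop :=
  computable_set (univ S) /\ computable_rel (E S).

(** Embedding of S into T (maps outside the universe of S are irrelevant). *)
Definition embedding (S T : structure) (f : nat -> nat) : Prop :=
  (forall x, univ S x -> univ T (f x)) /\
  (forall x y, univ S x -> univ S y -> f x = f y -> x = y) /\
  (forall x y, univ S x -> univ S y -> (E S x y <-> E T (f x) (f y))).

Definition isomorphism (S T : structure) (f : nat -> nat) : Prop :=
  embedding S T f /\ (forall y, univ T y -> exists x, univ S x /\ f x = y).

Definition embeds (S T : structure) : Prop := exists f, embedding S T f.
Definition computably_embeds (S T : structure) : Prop :=
  exists f, computable_fun f /\ embedding S T f.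

Definition bi_embeddable (S T : structure) : Prop := embeds S T /\ embeds T S.
Definition isomorphic (S T : structure) : Prop := exists f, isomorphism S T f.

Definition computably_bi_embeddably_categorical (A : structure) : Prop :=
  computable_structure A /\
  forall B, computable_structure B -> bi_embeddable A B ->
    computably_embeds A B /\ computably_embeds B A.

Definition computably_categorical (A : structure) : Prop :=
  computable_structure A /\
  forall B, computable_structure B -> isomorphic B A ->
    exists f, computable_fun f /\ isomorphism B A f.

(* Main.v *)
Require Import Defs.
From Stdlib Require Import List Arith Lia Cantor ClassicalEpsilon Classical.
From Stdlib Require FinFun.
Import ListNotations.

Section EvInd.
Variable P : prog -> list nat -> nat -> Prop.
Variable Q : list prog -> list nat -> list nat -> Prop.
Hypothesis Hzero : forall xs, P PZero xs 0.
Hypothesis Hsucc : forall x xs, P PSucc (x :: xs) (S x).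
Hypothesis Hproj : forall i xs y, nth_error xs i = Some y -> P (PProj i) xs y.
Hypothesis Hcomp : forall f gs xs ys y, evals gs xs ys -> Q gs xs ys -> eval f ys y -> P f ys y -> P (PComp f gs) xs y.
Hypothesis Hprim0 : forall f g xs y, eval f xs y -> P f xs y -> P (PPrim f g) (0 :: xs) y.
Hypothesis HprimS : forall f g n xs r y, eval (PPrim f g) (n :: xs) r -> P (PPrim f g) (n :: xs) r ->
   eval g (n :: r :: xs) y -> P g (n :: r :: xs) y -> P (PPrim f g) (S n :: xs) y.
Hypothesis Hmu : forall f xs n, eval f (n :: xs) 0 -> P f (n :: xs) 0 ->
   (forall m, m < n -> exists k, eval f (m :: xs) (S k) /\ P f (m :: xs) (S k)) -> P (PMu f) xs n.
Hypothesis Hnil : forall xs, Q [] xs [].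
Hypothesis Hcons : forall g gs xs y ys, eval g xs y -> P g xs y -> evals gs xs ys -> Q gs xs ys -> Q (g :: gs) xs (y :: ys).

Fixpoint ev_ind2 p xs y (H : eval p xs y) {struct H} : P p xs y :=
  match H in eval p xs y return P p xs y with
  | ev_zero xs => Hzero xs
  | ev_succ x xs => Hsucc x xs
  | ev_proj i xs y e => Hproj i xs y e
  | ev_comp f gs xs ys y H1 H2 => Hcomp f gs xs ys y H1 (evs_ind2 _ _ _ H1) H2 (ev_ind2 _ _ _ H2)
  | ev_prim0 f g xs y H1 => Hprim0 f g xs y H1 (ev_ind2 _ _ _ H1)
  | ev_primS f g n xs r y H1 H2 => HprimS f g n xs r y H1 (ev_ind2 _ _ _ H1) H2 (ev_ind2 _ _ _ H2)
  | ev_mu f xs n H0 Hl => Hmu f xs n H0 (ev_ind2 _ _ _ H0)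
      (fun m Hm => match Hl m Hm with ex_intro _ k Hk => ex_intro _ k (conj Hk (ev_ind2 _ _ _ Hk)) end)
  end
with evs_ind2 gs xs ys (H : evals gs xs ys) {struct H} : Q gs xs ys :=
  match H in evals gs xs ys return Q gs xs ys with
  | evs_nil xs => Hnil xs
  | evs_cons g gs xs y ys H1 H2 => Hcons g gs xs y ys H1 (ev_ind2 _ _ _ H1) H2 (evs_ind2 _ _ _ H2)
  end.
End EvInd.

Lemma eval_det : forall p xs y, eval p xs y -> forall y', eval p xs y' -> y = y'.
Proof.
  apply (ev_ind2 (fun p xs y => forall y', eval p xs y' -> y = y')
                 (fun gs xs ys => forall ys', evals gs xs ys' -> ys = ys')).
  - intros xs y' H; inversion H; auto.
  - intros x xs y' H; inversion H; auto.
  - intros i xs y e y' H; inversion H; congruence.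
  - intros f gs xs ys y _ IH1 _ IH2 y' H; inversion H as [| | |f' gs' xs' ys' y'' Hs Hf| | |]; subst.
    apply IH2. rewrite (IH1 _ Hs). auto.
  - intros f g xs y _ IH y' H; inversion H; subst; auto.
  - intros f g n xs r y _ IH1 _ IH2 y' H; inversion H as [| | | | |f' g' n' xs' r' y'' Hr Hg|]; subst.
    apply IH2. rewrite (IH1 _ Hr). auto.
  - intros f xs n _ IH0 IHl y' H; inversion H as [| | | | | |f' xs' n' Hz Hlt]; subst.
    destruct (Nat.lt_trichotomy n y') as [Hl|[Hl|Hl]]; auto.
    + destruct (Hlt n Hl) as [k Hk]. specialize (IH0 _ Hk). discriminate.
    + destruct (IHl y' Hl) as [k [_ Hk]]. specialize (Hk _ Hz). discriminate.
  - intros xs ys' H; inversion H; auto.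
  - intros g gs xs y ys _ IH1 _ IH2 ys' H; inversion H; subst.
    f_equal; auto.
Qed.

Definition cf (k : nat) (f : list nat -> nat) : Prop :=
  exists p, forall xs, length xs = k -> eval p xs (f xs).

Definition cfl (k : nat) (gs : list (list nat -> nat)) : Prop :=
  exists ps, forall xs, length xs = k -> evals ps xs (map (fun g => g xs) gs).

Lemma cfl_nil k : cfl k [].
Proof. exists []; intros; constructor. Qed.

Lemma cfl_cons k g gs : cf k g -> cfl k gs -> cfl k (g :: gs).
Proof.
  intros [p Hp] [ps Hps]; exists (p :: ps); intros xs Hx; simpl; constructor; auto.
Qed.

Lemma cf_ext k f g : cf k f -> (forall xs, length xs = k -> f xs = g xs) -> cf k g.
Proof. intros [p Hp] H; exists p; intros xs Hx; rewrite <- H by auto; auto. Qed.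

Lemma evals_length ps xs ys : evals ps xs ys -> length ys = length ps.
Proof. induction 1; simpl; auto. Qed.

Lemma cf_compl k m F gs : cf m F -> cfl k gs -> length gs = m ->
  cf k (fun xs => F (map (fun g => g xs) gs)).
Proof.
  intros [p Hp] [ps Hps] Hl; exists (PComp p ps); intros xs Hx.
  econstructor; [apply Hps; auto|]. apply Hp. rewrite length_map; auto.
Qed.

Lemma cf_zero k : cf k (fun _ => 0).
Proof. exists PZero; intros; constructor. Qed.

Lemma cf_succ1 : cf 1 (fun xs => S (nth 0 xs 0)).
Proof.
  exists PSucc; intros xs Hx. destruct xs as [|x [|]]; simpl in Hx; try lia. constructor.
Qed.

Lemma cf_proj k i : i < k -> cf k (fun xs => nth i xs 0).
Proof.
  intros Hi; exists (PProj i); intros xs Hx. constructor.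
  apply nth_error_nth'. lia.
Qed.

Lemma cf_comp1 k F G : cf 1 (fun ys => F (nth 0 ys 0)) -> cf k G -> cf k (fun xs => F (G xs)).
Proof.
  intros HF HG.
  apply (cf_ext k (fun xs => (fun ys => F (nth 0 ys 0)) (map (fun g => g xs) [G]))).
  - apply (cf_compl k 1 (fun ys => F (nth 0 ys 0)) [G]); auto. apply cfl_cons; auto. apply cfl_nil.
  - reflexivity.
Qed.

Lemma cf_comp2 k F G1 G2 : cf 2 (fun ys => F (nth 0 ys 0) (nth 1 ys 0)) -> cf k G1 -> cf k G2 ->
  cf k (fun xs => F (G1 xs) (G2 xs)).
Proof.
  intros HF H1 H2.
  apply (cf_ext k (fun xs => (fun ys => F (nth 0 ys 0) (nth 1 ys 0)) (map (fun g => g xs) [G1; G2]))).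
  - apply (cf_compl k 2 (fun ys => F (nth 0 ys 0) (nth 1 ys 0)) [G1;G2]); auto. repeat apply cfl_cons; auto. apply cfl_nil.
  - reflexivity.
Qed.

Lemma cf_comp3 k F G1 G2 G3 : cf 3 (fun ys => F (nth 0 ys 0) (nth 1 ys 0) (nth 2 ys 0)) ->
  cf k G1 -> cf k G2 -> cf k G3 ->
  cf k (fun xs => F (G1 xs) (G2 xs) (G3 xs)).
Proof.
  intros HF H1 H2 H3.
  apply (cf_ext k (fun xs => (fun ys => F (nth 0 ys 0) (nth 1 ys 0) (nth 2 ys 0)) (map (fun g => g xs) [G1; G2; G3]))).
  - apply (cf_compl k 3 (fun ys => F (nth 0 ys 0) (nth 1 ys 0) (nth 2 ys 0)) [G1;G2;G3]); auto. repeat apply cfl_cons; auto. apply cfl_nil.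
  - reflexivity.
Qed.

Lemma cf_comp4 k F G1 G2 G3 G4 : cf 4 (fun ys => F (nth 0 ys 0) (nth 1 ys 0) (nth 2 ys 0) (nth 3 ys 0)) ->
  cf k G1 -> cf k G2 -> cf k G3 -> cf k G4 ->
  cf k (fun xs => F (G1 xs) (G2 xs) (G3 xs) (G4 xs)).
Proof.
  intros HF H1 H2 H3 H4.
  apply (cf_ext k (fun xs => (fun ys => F (nth 0 ys 0) (nth 1 ys 0) (nth 2 ys 0) (nth 3 ys 0)) (map (fun g => g xs) [G1; G2; G3; G4]))).
  - apply (cf_compl k 4 (fun ys => F (nth 0 ys 0) (nth 1 ys 0) (nth 2 ys 0) (nth 3 ys 0)) [G1;G2;G3;G4]); auto. repeat apply cfl_cons; auto. apply cfl_nil.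
  - reflexivity.
Qed.

Lemma cf_succ k G : cf k G -> cf k (fun xs => S (G xs)).
Proof. intros; apply (cf_comp1 k S); auto using cf_succ1. Qed.

Lemma cf_const k c : cf k (fun _ => c).
Proof. induction c. apply cf_zero. apply (cf_succ k (fun _ => c)); auto. Qed.

Lemma cf_projtl k i : i < k -> cf (S k) (fun xs => nth i (tl xs) 0).
Proof.
  intros Hi. apply cf_ext with (f := fun xs => nth (S i) xs 0). apply cf_proj; lia.
  intros [|x xs] H; simpl in *; auto. lia.
Qed.

Lemma cf_prim k f g h : cf k f -> cf (S (S k)) g ->
  (forall xs, length xs = k -> h (0 :: xs) = f xs) ->
  (forall n xs, length xs = k -> h (S n :: xs) = g (n :: h (n :: xs) :: xs)) ->
  cf (S k) h.
Proof.
  intros [pf Hf] [pg Hg] H0 HS. exists (PPrim pf pg). intros [|n xs] Hx; simpl in Hx; [lia|].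
  injection Hx as Hx. induction n.
  - rewrite H0 by auto. constructor. auto.
  - rewrite HS by auto. econstructor; eauto. apply Hg. simpl; auto.
Qed.

Lemma cf_mu k f m : cf (S k) f ->
  (forall xs, length xs = k -> f (m xs :: xs) = 0 /\ forall j, j < m xs -> f (j :: xs) <> 0) ->
  cf k m.
Proof.
  intros [pf Hf] H. exists (PMu pf). intros xs Hx. destruct (H xs Hx) as [H1 H2].
  constructor.
  - rewrite <- H1. apply Hf. simpl; auto.
  - intros j Hj. specialize (H2 j Hj). destruct (f (j :: xs)) eqn:E; [congruence|].
    exists n. rewrite <- E. apply Hf. simpl; auto.
Qed.

Definition b2n (b : bool) : nat := if b then 1 else 0.
Definition ite (c a b : nat) : nat := match c with 0 => b | S _ => a end.
Definition eqn (x y : nat) : nat := b2n (Nat.eqb x y).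
Definition ltn (x y : nat) : nat := b2n (Nat.ltb x y).
Definition andn (a b : nat) : nat := ite a (ite b 1 0) 0.
Definition orn (a b : nat) : nat := ite a 1 (ite b 1 0).
Definition notn (a : nat) : nat := ite a 0 1.



Lemma cf_predl : cf 1 (fun ys => Nat.pred (nth 0 ys 0)).
Proof.
  eapply cf_ext.
  - apply (cf_prim 0 (fun _ => 0) (fun ys => nth 0 ys 0) (fun ys => Nat.pred (nth 0 ys 0))).
    apply cf_zero. apply cf_proj; lia. reflexivity. reflexivity.
  - reflexivity.
Qed.

Lemma cf_add : cf 2 (fun ys => nth 0 ys 0 + nth 1 ys 0).
Proof.
  apply (cf_prim 1 (fun ys => nth 0 ys 0) (fun ys => S (nth 1 ys 0))).
  apply cf_proj; lia. apply cf_succ, cf_proj; lia. reflexivity. reflexivity.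
Qed.

Lemma cf_add' : cf 2 (fun ys => Nat.add (nth 0 ys 0) (nth 1 ys 0)).
Proof. exact cf_add. Qed.

Lemma cf_mul : cf 2 (fun ys => nth 0 ys 0 * nth 1 ys 0).
Proof.
  apply (cf_prim 1 (fun ys => 0) (fun ys => nth 2 ys 0 + nth 1 ys 0)).
  apply cf_zero. apply (cf_comp2 3 Nat.add); [apply cf_add| apply cf_proj; lia | apply cf_proj; lia].
  reflexivity. intros; simpl; lia.
Qed.

Lemma cf_subr : cf 2 (fun ys => nth 1 ys 0 - nth 0 ys 0).
Proof.
  apply (cf_prim 1 (fun ys => nth 0 ys 0) (fun ys => Nat.pred (nth 1 ys 0))).
  apply cf_proj; lia. apply (cf_comp1 3 Nat.pred); [apply cf_predl | apply cf_proj; lia].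
  intros; simpl; lia. intros n xs Hx; simpl. lia.
Qed.

Lemma cf_sub : cf 2 (fun ys => nth 0 ys 0 - nth 1 ys 0).
Proof.
  apply (cf_comp2 2 (fun a b => b - a) (fun ys => nth 1 ys 0) (fun ys => nth 0 ys 0)).
  exact cf_subr. apply cf_proj; lia. apply cf_proj; lia.
Qed.

Lemma cf_ite : cf 3 (fun ys => ite (nth 0 ys 0) (nth 1 ys 0) (nth 2 ys 0)).
Proof.
  apply (cf_prim 2 (fun ys => nth 1 ys 0) (fun ys => nth 2 ys 0)).
  apply cf_proj; lia. apply cf_proj; lia. reflexivity. reflexivity.
Qed.

Lemma cf_eqn : cf 2 (fun ys => eqn (nth 0 ys 0) (nth 1 ys 0)).
Proof.
  apply cf_ext with (f := fun ys => 1 - ((nth 0 ys 0 - nth 1 ys 0) + (nth 1 ys 0 - nth 0 ys 0))).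
  - apply (cf_comp2 2 Nat.sub); [apply cf_sub | apply cf_const |].
    apply (cf_comp2 2 Nat.add); [apply cf_add|apply cf_sub|].
    apply (cf_comp2 2 Nat.sub (fun ys => nth 1 ys 0) (fun ys => nth 0 ys 0)); [apply cf_sub|apply cf_proj; lia|apply cf_proj; lia].
  - intros xs _. unfold eqn, b2n. destruct (Nat.eqb_spec (nth 0 xs 0) (nth 1 xs 0)); lia.
Qed.

Lemma cf_ltn : cf 2 (fun ys => ltn (nth 0 ys 0) (nth 1 ys 0)).
Proof.
  apply cf_ext with (f := fun ys => 1 - (1 - (nth 1 ys 0 - nth 0 ys 0))).
  - apply (cf_comp2 2 Nat.sub); [apply cf_sub | apply cf_const |].
    apply (cf_comp2 2 Nat.sub); [apply cf_sub | apply cf_const |].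
    apply (cf_comp2 2 Nat.sub (fun ys => nth 1 ys 0) (fun ys => nth 0 ys 0)); [apply cf_sub|apply cf_proj; lia|apply cf_proj; lia].
  - intros xs _. unfold ltn, b2n. destruct (Nat.ltb_spec (nth 0 xs 0) (nth 1 xs 0)); lia.
Qed.

Create HintDb cfdb.
#[export] Hint Resolve cf_succ1 cf_predl cf_add cf_add' cf_mul cf_sub cf_ite cf_eqn cf_ltn : cfdb.

Ltac cfa := repeat (match goal with
 | |- cf _ (fun _ => ?c) => apply cf_const
 | |- cf _ (fun xs => nth ?i xs 0) => apply cf_proj; lia
 | |- cf _ (fun xs => nth ?i (tl xs) 0) => apply cf_projtl; lia
 | |- cf _ (fun xs => ?F (@?G1 xs) (@?G2 xs) (@?G3 xs) (@?G4 xs)) =>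
     apply (cf_comp4 _ F); [solve [eauto with cfdb] | .. ]
 | |- cf _ (fun xs => ?F (@?G1 xs) (@?G2 xs) (@?G3 xs)) =>
     apply (cf_comp3 _ F); [solve [eauto with cfdb] | .. ]
 | |- cf _ (fun xs => ?F (@?G1 xs) (@?G2 xs)) =>
     apply (cf_comp2 _ F); [solve [eauto with cfdb] | .. ]
 | |- cf _ (fun xs => ?F (@?G1 xs)) =>
     apply (cf_comp1 _ F); [solve [eauto with cfdb] | .. ]
 end; cbv beta).

Lemma cf_andn : cf 2 (fun ys => andn (nth 0 ys 0) (nth 1 ys 0)).
Proof. unfold andn. cfa. Qed.
Lemma cf_orn : cf 2 (fun ys => orn (nth 0 ys 0) (nth 1 ys 0)).
Proof. unfold orn. cfa. Qed.
Lemma cf_notn : cf 1 (fun ys => notn (nth 0 ys 0)).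
Proof. unfold notn. cfa. Qed.
#[export] Hint Resolve cf_andn cf_orn cf_notn : cfdb.

Lemma test : cf 3 (fun xs => andn (nth 0 xs 0 + 3) (ite (nth 2 xs 0) 5 (nth 1 xs 0 * 2))).
Proof. cfa. Qed.

Lemma map_nth_seq (xs : list nat) : map (fun i => nth i xs 0) (seq 0 (length xs)) = xs.
Proof.
  induction xs as [|x xs IH]; simpl; auto. f_equal.
  rewrite <- seq_shift, map_map. simpl. exact IH.
Qed.

Lemma cfl_projs k idx : (forall i, In i idx -> i < k) -> cfl k (map (fun i xs => nth i xs 0) idx).
Proof.
  induction idx as [|i idx IH]; intros H; simpl. apply cfl_nil.
  apply cfl_cons. apply cf_proj; apply H; simpl; auto. apply IH; intros; apply H; simpl; auto.
Qed.

Lemma cf_cons_arg k F N : cf (S k) F -> cf k N -> cf k (fun xs => F (N xs :: xs)).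
Proof.
  intros HF HN.
  eapply cf_ext.
  - apply (cf_compl k (S k) F (N :: map (fun i xs => nth i xs 0) (seq 0 k))); auto.
    apply cfl_cons; auto. apply cfl_projs. intros i Hi. apply in_seq in Hi. lia.
    simpl. rewrite length_map, length_seq. auto.
  - intros xs Hx. simpl. rewrite map_map. rewrite <- Hx, map_nth_seq. auto.
Qed.

Lemma cf_drop1 k F : cf (S k) F -> cf (S (S k)) (fun ys => F (nth 0 ys 0 :: tl (tl ys))).
Proof.
  intros HF.
  eapply cf_ext.
  - apply (cf_compl (S (S k)) (S k) F (map (fun i xs => nth i xs 0) (0 :: map (fun i => S (S i)) (seq 0 k)))); auto.
    apply cfl_projs. intros i [Hi|Hi]. lia. apply in_map_iff in Hi. destruct Hi as [j [<- Hj]].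
    apply in_seq in Hj. lia.
    simpl. rewrite !length_map, length_seq. auto.
  - intros xs Hx. simpl. rewrite !map_map. f_equal.
    destruct xs as [|a [|b xs]]; simpl in Hx; try lia. simpl.
    injection Hx as Hx. rewrite <- Hx. rewrite map_nth_seq; auto.
Qed.

Fixpoint bmin (n : nat) (P : nat -> nat) : nat :=
  match n with
  | 0 => 0
  | S n' => ite (eqn (bmin n' P) n') (ite (P n') n' (S n')) (bmin n' P)
  end.

Lemma cf_bmin k N P : cf k N -> cf (S k) (fun ys => P (nth 0 ys 0) (tl ys)) ->
  cf k (fun xs => bmin (N xs) (fun j => P j xs)).
Proof.
  intros HN HP.
  assert (H : cf (S k) (fun ys => bmin (nth 0 ys 0) (fun j => P j (tl ys)))).
  { apply (cf_prim k (fun _ => 0)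
      (fun ys => ite (eqn (nth 1 ys 0) (nth 0 ys 0)) (ite (P (nth 0 ys 0) (tl (tl ys))) (nth 0 ys 0) (S (nth 0 ys 0))) (nth 1 ys 0))).
    - apply cf_zero.
    - pose proof (cf_drop1 k _ HP) as HP2. cbv beta in HP2.
      assert (HP3 : cf (S (S k)) (fun ys => P (nth 0 ys 0) (tl (tl ys)))).
      { eapply cf_ext; [exact HP2|]. intros; reflexivity. }
      apply (cf_comp3 _ ite); [apply cf_ite | | | apply cf_proj; lia].
      + apply (cf_comp2 _ eqn); [apply cf_eqn | apply cf_proj; lia| apply cf_proj; lia].
      + apply (cf_comp3 _ ite); [apply cf_ite | exact HP3 | apply cf_proj; lia |].
        apply cf_succ, cf_proj; lia.
    - reflexivity.
    - reflexivity. }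
  eapply cf_ext; [apply (cf_cons_arg k _ N H HN)|]. intros; reflexivity.
Qed.

Lemma bmin_le n P : bmin n P <= n.
Proof.
  induction n; simpl; auto. unfold ite, eqn, b2n.
  destruct (Nat.eqb_spec (bmin n P) n); simpl. destruct (P n); lia. lia.
Qed.

Lemma bmin_zero n P : forall j, j < bmin n P -> P j = 0.
Proof.
  induction n; simpl; intros j Hj. lia.
  unfold ite at 1, eqn, b2n in Hj.
  destruct (Nat.eqb_spec (bmin n P) n); simpl in Hj.
  - destruct (P n) eqn:E; simpl in Hj.
    + destruct (Nat.eq_dec j n). subst; auto. apply IHn; lia.
    + apply IHn; lia.
  - apply IHn; auto.
Qed.

Lemma bmin_found n P : bmin n P < n -> P (bmin n P) <> 0.
Proof.
  induction n; simpl; intros H. lia.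
  unfold eqn, b2n in *.
  destruct (Nat.eqb_spec (bmin n P) n); simpl in *.
  - destruct (P n) eqn:E; simpl in *. lia. rewrite E; lia.
  - apply IHn. pose proof (bmin_le n P). lia.
Qed.

Lemma bmin_spec_lt n P j : j < n -> P j <> 0 -> bmin n P <= j.
Proof.
  intros Hj HP. destruct (Nat.le_gt_cases (bmin n P) j); auto.
  exfalso. apply HP. apply bmin_zero with n. auto.
Qed.

Definition bex (n : nat) (P : nat -> nat) : nat := ltn (bmin n P) n.
Definition ball (n : nat) (P : nat -> nat) : nat := eqn (bmin n (fun j => notn (P j))) n.

Lemma bex_spec n P : bex n P = 1 <-> exists j, j < n /\ P j <> 0.
Proof.
  unfold bex, ltn, b2n. destruct (Nat.ltb_spec (bmin n P) n) as [Hl|Hl]; split; intros H; try congruence.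
  - exists (bmin n P). split; auto. apply bmin_found; auto.
  - destruct H as [j [Hj HP]]. pose proof (bmin_spec_lt n P j Hj HP) as Hb. lia.
Qed.

Lemma bex_01 n P : bex n P = 0 \/ bex n P = 1.
Proof. unfold bex, ltn, b2n. destruct (Nat.ltb _ _); auto. Qed.

Lemma bex_spec0 n P : bex n P = 0 <-> forall j, j < n -> P j = 0.
Proof.
  split.
  - intros H j Hj. destruct (P j) eqn:E; auto. exfalso.
    assert (bex n P = 1) by (apply bex_spec; exists j; split; auto; lia). lia.
  - intros H. destruct (bex_01 n P) as [|H1]; auto. apply bex_spec in H1.
    destruct H1 as [j [Hj Hp]]. specialize (H j Hj). congruence.
Qed.

Lemma notn_spec a : notn a <> 0 <-> a = 0.
Proof. unfold notn, ite. destruct a; split; intros; congruence || lia. Qed.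

Lemma ball_spec n P : ball n P = 1 <-> forall j, j < n -> P j <> 0.
Proof.
  unfold ball, eqn, b2n.
  destruct (Nat.eqb_spec (bmin n (fun j => notn (P j))) n) as [E|E]; split; intros H; try congruence.
  - intros j Hj HP. assert (notn (P j) <> 0) by (apply notn_spec; auto).
    pose proof (bmin_spec_lt n (fun j => notn (P j)) j Hj H0). lia.
  - exfalso. pose proof (bmin_le n (fun j => notn (P j))).
    assert (Hl : bmin n (fun j => notn (P j)) < n) by lia.
    apply bmin_found in Hl. apply notn_spec in Hl. apply (H _ (ltac:(lia) : bmin n (fun j => notn (P j)) < n)). auto.
Qed.

Lemma ball_01 n P : ball n P = 0 \/ ball n P = 1.
Proof. unfold ball, eqn, b2n. destruct (Nat.eqb _ _); auto. Qed.

Lemma cf_bex k N P : cf k N -> cf (S k) (fun ys => P (nth 0 ys 0) (tl ys)) ->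
  cf k (fun xs => bex (N xs) (fun j => P j xs)).
Proof.
  intros HN HP. unfold bex.
  apply (cf_comp2 _ ltn); [apply cf_ltn| |auto]. apply cf_bmin; auto.
Qed.

Lemma cf_ball k N P : cf k N -> cf (S k) (fun ys => P (nth 0 ys 0) (tl ys)) ->
  cf k (fun xs => ball (N xs) (fun j => P j xs)).
Proof.
  intros HN HP. unfold ball.
  apply (cf_comp2 _ eqn); [apply cf_eqn| |auto]. 
  apply (cf_bmin k N (fun j xs => notn (P j xs))); auto.
  apply (cf_comp1 _ notn); auto. apply cf_notn.
Qed.

Lemma cf_projtl2 k i : i + 2 < k -> cf k (fun xs => nth i (tl (tl xs)) 0).
Proof.
  intros Hi. apply cf_ext with (f := fun xs => nth (S (S i)) xs 0). apply cf_proj; lia.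
  intros [|x [|y xs]] H; simpl in *; auto; destruct i; auto.
Qed.
Lemma cf_projtl3 k i : i + 3 < k -> cf k (fun xs => nth i (tl (tl (tl xs))) 0).
Proof.
  intros Hi. apply cf_ext with (f := fun xs => nth (S (S (S i))) xs 0). apply cf_proj; lia.
  intros [|x [|y [|z xs]]] H; simpl in *; auto; destruct i; auto.
Qed.
Lemma cf_projtl' k i : i + 1 < k -> cf k (fun xs => nth i (tl xs) 0).
Proof.
  intros Hi. apply cf_ext with (f := fun xs => nth (S i) xs 0). apply cf_proj; lia.
  intros [|x xs] H; simpl in *; auto; destruct i; auto.
Qed.

Ltac cfb := repeat (match goal with
 | |- cf _ (fun _ => ?c) => apply cf_const
 | |- cf _ (fun xs => nth ?i xs 0) => apply cf_proj; lia
 | |- cf _ (fun xs => nth ?i (tl xs) 0) => apply cf_projtl'; lia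
 | |- cf _ (fun xs => nth ?i (tl (tl xs)) 0) => apply cf_projtl2; lia
 | |- cf _ (fun xs => nth ?i (tl (tl (tl xs))) 0) => apply cf_projtl3; lia
 | |- cf _ (fun xs => bmin (@?N xs) (fun j => @?P j xs)) => apply (cf_bmin _ N P)
 | |- cf _ (fun xs => bex (@?N xs) (fun j => @?P j xs)) => apply (cf_bex _ N P)
 | |- cf _ (fun xs => ball (@?N xs) (fun j => @?P j xs)) => apply (cf_ball _ N P)
 | |- cf _ (fun xs => ?F (@?G1 xs) (@?G2 xs) (@?G3 xs) (@?G4 xs)) =>
     apply (cf_comp4 _ F); [solve [eauto with cfdb] | .. ]
 | |- cf _ (fun xs => ?F (@?G1 xs) (@?G2 xs) (@?G3 xs)) =>
     apply (cf_comp3 _ F); [solve [eauto with cfdb] | .. ]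
 | |- cf _ (fun xs => ?F (@?G1 xs) (@?G2 xs)) =>
     apply (cf_comp2 _ F); [solve [eauto with cfdb] | .. ]
 | |- cf _ (fun xs => ?F (@?G1 xs)) =>
     apply (cf_comp1 _ F); [solve [eauto with cfdb] | .. ]
 end; cbv beta).

Lemma test2 : cf 2 (fun xs => bex (nth 0 xs 0) (fun j => ball j (fun m => eqn (m + j) (nth 1 xs 0)))).
Proof. cfb. Qed.

Definition tri (n : nat) : nat := nat_rec (fun _ => nat) 0 (fun i m => S i + m) n.
Definition pr (x y : nat) : nat := y + tri (y + x).

Lemma pr_to_nat x y : pr x y = Cantor.to_nat (x, y).
Proof. reflexivity. Qed.

Lemma pr_inj x y x' y' : pr x y = pr x' y' -> x = x' /\ y = y'.
Proof. rewrite !pr_to_nat. intros H. apply to_nat_inj in H. injection H; auto. Qed.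

Lemma pr_ge x y : x <= pr x y /\ y <= pr x y.
Proof. rewrite pr_to_nat. pose proof (to_nat_non_decreasing x y). lia. Qed.

Lemma pr_surj c : exists x y, pr x y = c.
Proof.
  destruct (Cantor.of_nat c) as [x y] eqn:E. exists x, y. rewrite pr_to_nat, <- E.
  apply cancel_to_of.
Qed.

Lemma cf_tri : cf 1 (fun ys => tri (nth 0 ys 0)).
Proof.
  apply (cf_prim 0 (fun _ => 0) (fun ys => S (nth 0 ys 0) + nth 1 ys 0)).
  apply cf_zero. cfb. intros xs H; reflexivity. intros; reflexivity.
Qed.
#[export] Hint Resolve cf_tri : cfdb.

Lemma cf_pr : cf 2 (fun ys => pr (nth 0 ys 0) (nth 1 ys 0)).
Proof. unfold pr. cfb. Qed.
#[export] Hint Resolve cf_pr : cfdb.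

Definition p1 (c : nat) : nat := bmin (S c) (fun x => bex (S c) (fun y => eqn (pr x y) c)).
Definition p2 (c : nat) : nat := bmin (S c) (fun y => eqn (pr (p1 c) y) c).

Lemma cf_p1 : cf 1 (fun ys => p1 (nth 0 ys 0)).
Proof. unfold p1. cfb. Qed.
#[export] Hint Resolve cf_p1 : cfdb.
Lemma cf_p2 : cf 1 (fun ys => p2 (nth 0 ys 0)).
Proof. unfold p2. cfb. Qed.
#[export] Hint Resolve cf_p2 : cfdb.

Lemma eqn_spec x y : eqn x y <> 0 <-> x = y.
Proof. unfold eqn, b2n. destruct (Nat.eqb_spec x y); split; intros; congruence || lia. Qed.

Lemma p1_pr x y : p1 (pr x y) = x.
Proof.
  unfold p1. set (c := pr x y). pose proof (pr_ge x y) as [Hx Hy].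
  assert (H1 : bmin (S c) (fun x => bex (S c) (fun y => eqn (pr x y) c)) <= x).
  { apply bmin_spec_lt. unfold c; lia. intros H. 
    assert (bex (S c) (fun y0 => eqn (pr x y0) c) = 1). apply bex_spec. exists y. split. unfold c; lia.
    apply eqn_spec. auto. lia. }
  set (m := bmin _ _) in *.
  assert (Hm : m < S c) by (unfold c in *; lia).
  apply bmin_found in Hm. fold m in Hm.
  destruct (bex_01 (S c) (fun y0 => eqn (pr m y0) c)) as [E|E]; [congruence|].
  apply bex_spec in E. destruct E as [y' [_ E]]. apply eqn_spec in E. unfold c in E.
  apply pr_inj in E. destruct E; auto.
Qed.

Lemma p2_pr x y : p2 (pr x y) = y.
Proof.
  unfold p2. rewrite p1_pr. set (c := pr x y). pose proof (pr_ge x y) as [Hx Hy].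
  assert (H1 : bmin (S c) (fun y0 => eqn (pr x y0) c) <= y).
  { apply bmin_spec_lt. unfold c; lia. apply eqn_spec. auto. }
  set (m := bmin _ _) in *.
  assert (Hm : m < S c) by (unfold c in *; lia).
  apply bmin_found in Hm. fold m in Hm. apply eqn_spec in Hm. unfold c in Hm.
  apply pr_inj in Hm. destruct Hm; auto.
Qed.

Lemma pr_p1p2 c : pr (p1 c) (p2 c) = c.
Proof. destruct (pr_surj c) as [x [y <-]]. rewrite p1_pr, p2_pr. auto. Qed.

Lemma p1_le c : p1 c <= c.
Proof. rewrite <- (pr_p1p2 c) at 2. apply pr_ge. Qed.
Lemma p2_le c : p2 c <= c.
Proof. rewrite <- (pr_p1p2 c) at 2. apply pr_ge. Qed.

Fixpoint encl (l : list nat) : nat :=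
  match l with [] => 0 | x :: l => S (pr x (encl l)) end.
Definition consc (x c : nat) : nat := S (pr x c).
Definition hdc (c : nat) : nat := p1 (pred c).
Definition tlc (c : nat) : nat := p2 (pred c).
Fixpoint tln (n c : nat) : nat := match n with 0 => c | S n => tlc (tln n c) end.
Definition nthc (c i : nat) : nat := hdc (tln i c).
Definition lenc (c : nat) : nat := bmin (S c) (fun n => eqn (tln n c) 0).

Lemma cf_consc : cf 2 (fun ys => consc (nth 0 ys 0) (nth 1 ys 0)).
Proof. unfold consc. cfb. Qed.
Lemma cf_hdc : cf 1 (fun ys => hdc (nth 0 ys 0)).
Proof. unfold hdc. cfb. Qed.
Lemma cf_tlc : cf 1 (fun ys => tlc (nth 0 ys 0)).
Proof. unfold tlc. cfb. Qed.
#[export] Hint Resolve cf_consc cf_hdc cf_tlc : cfdb.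
Lemma cf_tln : cf 2 (fun ys => tln (nth 0 ys 0) (nth 1 ys 0)).
Proof.
  apply (cf_prim 1 (fun ys => nth 0 ys 0) (fun ys => tlc (nth 1 ys 0))).
  cfb. cfb. intros; reflexivity. intros; reflexivity.
Qed.
#[export] Hint Resolve cf_tln : cfdb.
Lemma cf_nthc : cf 2 (fun ys => nthc (nth 0 ys 0) (nth 1 ys 0)).
Proof. unfold nthc. cfb. Qed.
Lemma cf_lenc : cf 1 (fun ys => lenc (nth 0 ys 0)).
Proof. unfold lenc. cfb. Qed.
#[export] Hint Resolve cf_nthc cf_lenc : cfdb.

Lemma encl_cons x l : encl (x :: l) = consc x (encl l).
Proof. reflexivity. Qed.
Lemma hdc_cons x c : hdc (consc x c) = x.
Proof. unfold hdc, consc. simpl. apply p1_pr. Qed.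
Lemma tlc_cons x c : tlc (consc x c) = c.
Proof. unfold tlc, consc. simpl. apply p2_pr. Qed.
Lemma hdc_0 : hdc 0 = 0.
Proof. unfold hdc. simpl. pose proof (p1_le 0). lia. Qed.
Lemma tlc_0 : tlc 0 = 0.
Proof. unfold tlc. simpl. pose proof (p2_le 0). lia. Qed.
Lemma consc_nz x c : consc x c <> 0.
Proof. unfold consc; lia. Qed.

Lemma tln_S n c : tln (S n) c = tln n (tlc c).
Proof. induction n; simpl; auto; try (simpl in IHn; rewrite IHn; auto). Qed.

Lemma tln_encl n l : tln n (encl l) = encl (skipn n l).
Proof.
  revert l; induction n; intros l; auto.
  rewrite tln_S. destruct l as [|x l].
  - change (encl []) with 0. rewrite tlc_0. change 0 with (encl []). rewrite (IHn []). destruct n; auto.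
  - simpl encl at 1. fold (consc x (encl l)). rewrite tlc_cons, IHn. auto.
Qed.

Lemma nthc_encl l i : nthc (encl l) i = nth i l 0.
Proof.
  unfold nthc. rewrite tln_encl. revert i; induction l; intros [|i].
  - apply hdc_0.
  - apply hdc_0.
  - simpl. fold (consc a (encl l)). apply hdc_cons.
  - simpl. rewrite <- IHl. auto.
Qed.

Lemma encl_ge_len l : length l <= encl l.
Proof. induction l; simpl; auto. pose proof (pr_ge a (encl l)). lia. Qed.

Lemma encl_0 l : encl l = 0 -> l = [].
Proof. destruct l; simpl; auto. lia. Qed.

Lemma lenc_encl l : lenc (encl l) = length l.
Proof.
  unfold lenc. pose proof (encl_ge_len l).
  assert (H1 : bmin (S (encl l)) (fun n => eqn (tln n (encl l)) 0) <= length l).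
  { apply bmin_spec_lt. lia. apply eqn_spec. rewrite tln_encl, skipn_all; auto. }
  set (m := bmin _ _) in *. destruct (Nat.eq_dec m (length l)); auto.
  exfalso. assert (Hm : m < S (encl l)) by lia. apply bmin_found in Hm. fold m in Hm.
  apply eqn_spec in Hm. rewrite tln_encl in Hm. rename Hm into Hz. apply encl_0 in Hz.
  assert (length (skipn m l) = 0) by (rewrite Hz; auto). rewrite length_skipn in H0. lia.
Qed.

Lemma encl_surj c : exists l, encl l = c.
Proof.
  induction c as [c IH] using (well_founded_induction lt_wf).
  destruct c as [|m]. exists []; auto.
  destruct (IH (p2 m)) as [l Hl]. pose proof (p2_le m). lia.
  exists (p1 m :: l). simpl. rewrite Hl, pr_p1p2. auto.
Qed.

Lemma encl_inj l l' : encl l = encl l' -> l = l'.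
Proof.
  revert l'; induction l; intros [|x l'] H; simpl in H; auto; try lia.
  injection H as H. apply pr_inj in H. destruct H. subst. f_equal. auto.
Qed.

Lemma cf_comp5 k F G1 G2 G3 G4 G5 :
  cf 5 (fun ys => F (nth 0 ys 0) (nth 1 ys 0) (nth 2 ys 0) (nth 3 ys 0) (nth 4 ys 0)) ->
  cf k G1 -> cf k G2 -> cf k G3 -> cf k G4 -> cf k G5 ->
  cf k (fun xs => F (G1 xs) (G2 xs) (G3 xs) (G4 xs) (G5 xs)).
Proof.
  intros HF H1 H2 H3 H4 H5.
  apply (cf_ext k (fun xs => (fun ys => F (nth 0 ys 0) (nth 1 ys 0) (nth 2 ys 0) (nth 3 ys 0) (nth 4 ys 0)) (map (fun g => g xs) [G1; G2; G3; G4; G5]))).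
  - apply (cf_compl k 5 (fun ys => F (nth 0 ys 0) (nth 1 ys 0) (nth 2 ys 0) (nth 3 ys 0) (nth 4 ys 0)) [G1;G2;G3;G4;G5]); auto.
    repeat apply cfl_cons; auto. apply cfl_nil.
  - reflexivity.
Qed.

Lemma cf_comp6 k F G1 G2 G3 G4 G5 G6 :
  cf 6 (fun ys => F (nth 0 ys 0) (nth 1 ys 0) (nth 2 ys 0) (nth 3 ys 0) (nth 4 ys 0) (nth 5 ys 0)) ->
  cf k G1 -> cf k G2 -> cf k G3 -> cf k G4 -> cf k G5 -> cf k G6 ->
  cf k (fun xs => F (G1 xs) (G2 xs) (G3 xs) (G4 xs) (G5 xs) (G6 xs)).
Proof.
  intros HF H1 H2 H3 H4 H5 H6.
  apply (cf_ext k (fun xs => (fun ys => F (nth 0 ys 0) (nth 1 ys 0) (nth 2 ys 0) (nth 3 ys 0) (nth 4 ys 0) (nth 5 ys 0)) (map (fun g => g xs) [G1; G2; G3; G4; G5; G6]))).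
  - apply (cf_compl k 6 (fun ys => F (nth 0 ys 0) (nth 1 ys 0) (nth 2 ys 0) (nth 3 ys 0) (nth 4 ys 0) (nth 5 ys 0)) [G1;G2;G3;G4;G5;G6]); auto.
    repeat apply cfl_cons; auto. apply cfl_nil.
  - reflexivity.
Qed.

Ltac cfc := repeat (match goal with
 | |- cf _ (fun _ => ?c) => apply cf_const
 | |- cf _ (fun xs => nth ?i xs 0) => apply cf_proj; lia
 | |- cf _ (fun xs => nth ?i (tl xs) 0) => apply cf_projtl'; lia
 | |- cf _ (fun xs => nth ?i (tl (tl xs)) 0) => apply cf_projtl2; lia
 | |- cf _ (fun xs => nth ?i (tl (tl (tl xs))) 0) => apply cf_projtl3; lia
 | |- cf _ (fun xs => bmin (@?N xs) (fun j => @?P j xs)) => apply (cf_bmin _ N P)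
 | |- cf _ (fun xs => bex (@?N xs) (fun j => @?P j xs)) => apply (cf_bex _ N P)
 | |- cf _ (fun xs => ball (@?N xs) (fun j => @?P j xs)) => apply (cf_ball _ N P)
 | |- cf _ (fun xs => ?F (@?G1 xs) (@?G2 xs) (@?G3 xs) (@?G4 xs) (@?G5 xs) (@?G6 xs)) =>
     apply (cf_comp6 _ F); [solve [eauto with cfdb] | .. ]
 | |- cf _ (fun xs => ?F (@?G1 xs) (@?G2 xs) (@?G3 xs) (@?G4 xs) (@?G5 xs)) =>
     apply (cf_comp5 _ F); [solve [eauto with cfdb] | .. ]
 | |- cf _ (fun xs => ?F (@?G1 xs) (@?G2 xs) (@?G3 xs) (@?G4 xs)) =>
     apply (cf_comp4 _ F); [solve [eauto with cfdb] | .. ]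
 | |- cf _ (fun xs => ?F (@?G1 xs) (@?G2 xs) (@?G3 xs)) =>
     apply (cf_comp3 _ F); [solve [eauto with cfdb] | .. ]
 | |- cf _ (fun xs => ?F (@?G1 xs) (@?G2 xs)) =>
     apply (cf_comp2 _ F); [solve [eauto with cfdb] | .. ]
 | |- cf _ (fun xs => ?F (@?G1 xs)) =>
     apply (cf_comp1 _ F); [solve [eauto with cfdb] | .. ]
 end; cbv beta).

Fixpoint enc (p : prog) : nat :=
  match p with
  | PZero => pr 0 0
  | PSucc => pr 1 0
  | PProj i => pr 2 i
  | PComp f gs => pr 3 (pr (enc f) (encl (map enc gs)))
  | PPrim f g => pr 4 (pr (enc f) (enc g))
  | PMu f => pr 5 (enc f)
  end.

Definition fct (p : prog) (xs : list nat) (y : nat) : nat := pr (enc p) (pr (encl xs) y).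
Definition fp (t : nat) : nat := p1 t.
Definition fx (t : nat) : nat := p1 (p2 t).
Definition fy (t : nat) : nat := p2 (p2 t).

Lemma cf_fp : cf 1 (fun ys => fp (nth 0 ys 0)).
Proof. unfold fp; cfc. Qed.
Lemma cf_fx : cf 1 (fun ys => fx (nth 0 ys 0)).
Proof. unfold fx; cfc. Qed.
Lemma cf_fy : cf 1 (fun ys => fy (nth 0 ys 0)).
Proof. unfold fy; cfc. Qed.
#[export] Hint Resolve cf_fp cf_fx cf_fy : cfdb.

Definition earl (C i t : nat) : nat := bex i (fun j => eqn (nthc C j) t).
Lemma cf_earl : cf 3 (fun ys => earl (nth 0 ys 0) (nth 1 ys 0) (nth 2 ys 0)).
Proof. unfold earl; cfc. Qed.
#[export] Hint Resolve cf_earl : cfdb.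

Definition jz (y : nat) : nat := eqn y 0.
Definition js (xc y : nat) : nat := andn (notn (eqn xc 0)) (eqn y (S (hdc xc))).
Definition jp (b xc y : nat) : nat := andn (ltn b (lenc xc)) (eqn y (nthc xc b)).
Definition jc (C i b xc y : nat) : nat :=
  bex i (fun j => andn (andn (eqn (fp (nthc C j)) (p1 b)) (eqn (fy (nthc C j)) y))
                       (andn (eqn (lenc (fx (nthc C j))) (lenc (p2 b)))
                             (ball (lenc (p2 b)) (fun m => earl C i (pr (nthc (p2 b) m) (pr xc (nthc (fx (nthc C j)) m))))))).
Definition jr (C i pc b xc y : nat) : nat :=
  andn (notn (eqn xc 0))
   (ite (hdc xc)
     (bex i (fun j => andn (andn (eqn (fp (nthc C j)) pc) (eqn (fx (nthc C j)) (consc (pred (hdc xc)) (tlc xc))))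
                           (earl C i (pr (p2 b) (pr (consc (pred (hdc xc)) (consc (fy (nthc C j)) (tlc xc))) y)))))
     (earl C i (pr (p1 b) (pr (tlc xc) y)))).
Definition jm (C i b xc y : nat) : nat :=
  andn (earl C i (pr b (pr (consc y xc) 0)))
       (ball y (fun m => bex i (fun j => andn (andn (eqn (fp (nthc C j)) b) (eqn (fx (nthc C j)) (consc m xc)))
                                              (notn (eqn (fy (nthc C j)) 0))))).

Lemma cf_jz : cf 1 (fun ys => jz (nth 0 ys 0)).
Proof. unfold jz; cfc. Qed.
Lemma cf_js : cf 2 (fun ys => js (nth 0 ys 0) (nth 1 ys 0)).
Proof. unfold js; cfc. Qed.
Lemma cf_jp : cf 3 (fun ys => jp (nth 0 ys 0) (nth 1 ys 0) (nth 2 ys 0)).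
Proof. unfold jp; cfc. Qed.
Lemma cf_jc : cf 5 (fun ys => jc (nth 0 ys 0) (nth 1 ys 0) (nth 2 ys 0) (nth 3 ys 0) (nth 4 ys 0)).
Proof. unfold jc; cfc. Qed.
Lemma cf_jr : cf 6 (fun ys => jr (nth 0 ys 0) (nth 1 ys 0) (nth 2 ys 0) (nth 3 ys 0) (nth 4 ys 0) (nth 5 ys 0)).
Proof. unfold jr; cfc. Qed.
Lemma cf_jm : cf 5 (fun ys => jm (nth 0 ys 0) (nth 1 ys 0) (nth 2 ys 0) (nth 3 ys 0) (nth 4 ys 0)).
Proof. unfold jm; cfc. Qed.
#[export] Hint Resolve cf_jz cf_js cf_jp cf_jc cf_jr cf_jm : cfdb.

Definition justF (C i pc xc y : nat) : nat :=
  ite (eqn (p1 pc) 0) (jz y)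
  (ite (eqn (p1 pc) 1) (js xc y)
  (ite (eqn (p1 pc) 2) (jp (p2 pc) xc y)
  (ite (eqn (p1 pc) 3) (jc C i (p2 pc) xc y)
  (ite (eqn (p1 pc) 4) (jr C i pc (p2 pc) xc y)
  (ite (eqn (p1 pc) 5) (jm C i (p2 pc) xc y) 0))))).
Lemma cf_justF : cf 5 (fun ys => justF (nth 0 ys 0) (nth 1 ys 0) (nth 2 ys 0) (nth 3 ys 0) (nth 4 ys 0)).
Proof. unfold justF; cfc. Qed.
#[export] Hint Resolve cf_justF : cfdb.

Definition just (C i : nat) : nat := justF C i (fp (nthc C i)) (fx (nthc C i)) (fy (nthc C i)).
Definition valid (C : nat) : nat := ball (lenc C) (fun i => just C i).
Definition chk (e C : nat) : nat :=
  andn (valid C) (bex (lenc C) (fun j => andn (eqn (fp (nthc C j)) e) (eqn (fx (nthc C j)) (consc e 0)))).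

Lemma cf_just : cf 2 (fun ys => just (nth 0 ys 0) (nth 1 ys 0)).
Proof. unfold just; cfc. Qed.
#[export] Hint Resolve cf_just : cfdb.
Lemma cf_valid : cf 1 (fun ys => valid (nth 0 ys 0)).
Proof. unfold valid; cfc. Qed.
#[export] Hint Resolve cf_valid : cfdb.
Lemma cf_chk : cf 2 (fun ys => chk (nth 0 ys 0) (nth 1 ys 0)).
Proof. unfold chk; cfc. Qed.
#[export] Hint Resolve cf_chk : cfdb.

Lemma andn_spec a b : andn a b <> 0 <-> a <> 0 /\ b <> 0.
Proof. unfold andn, ite. destruct a, b; split; intros; try lia; intuition. Qed.
Lemma ltn_spec a b : ltn a b <> 0 <-> a < b.
Proof. unfold ltn, b2n. destruct (Nat.ltb_spec a b); split; intros; lia. Qed.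
Lemma notn_spec' a : notn a <> 0 <-> ~ a <> 0.
Proof. unfold notn, ite. destruct a; split; intros; lia. Qed.
Lemma bex_spec' n P : bex n P <> 0 <-> exists j, j < n /\ P j <> 0.
Proof. rewrite <- bex_spec. pose proof (bex_01 n P). lia. Qed.
Lemma ball_spec' n P : ball n P <> 0 <-> forall j, j < n -> P j <> 0.
Proof. rewrite <- ball_spec. pose proof (ball_01 n P). lia. Qed.
Lemma earl_spec C i t : earl C i t <> 0 <-> exists j, j < i /\ nthc C j = t.
Proof.
  unfold earl. rewrite bex_spec'. split; intros [j [Hj H]]; exists j; split; auto; apply eqn_spec; auto.
Qed.

Definition justP (Ear : nat -> Prop) (pc xc y : nat) : Prop :=
  (p1 pc = 0 /\ y = 0) \/
  (p1 pc = 1 /\ xc <> 0 /\ y = S (hdc xc)) \/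
  (p1 pc = 2 /\ p2 pc < lenc xc /\ y = nthc xc (p2 pc)) \/
  (p1 pc = 3 /\ exists u, Ear u /\ fp u = p1 (p2 pc) /\ fy u = y /\ lenc (fx u) = lenc (p2 (p2 pc)) /\
      forall m, m < lenc (p2 (p2 pc)) -> Ear (pr (nthc (p2 (p2 pc)) m) (pr xc (nthc (fx u) m)))) \/
  (p1 pc = 4 /\ xc <> 0 /\
     ((hdc xc = 0 /\ Ear (pr (p1 (p2 pc)) (pr (tlc xc) y))) \/
      (hdc xc <> 0 /\ exists u, Ear u /\ fp u = pc /\ fx u = consc (pred (hdc xc)) (tlc xc) /\
          Ear (pr (p2 (p2 pc)) (pr (consc (pred (hdc xc)) (consc (fy u) (tlc xc))) y))))) \/
  (p1 pc = 5 /\ Ear (pr (p2 pc) (pr (consc y xc) 0)) /\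
     forall m, m < y -> exists u, Ear u /\ fp u = p2 pc /\ fx u = consc m xc /\ fy u <> 0).

Lemma justP_mono (E1 E2 : nat -> Prop) pc xc y : (forall u, E1 u -> E2 u) ->
  justP E1 pc xc y -> justP E2 pc xc y.
Proof.
  intros HE H. unfold justP in *.
  destruct H as [H|[H|[H|[H|[H|H]]]]].
  - left; auto.
  - right; left; auto.
  - right; right; left; auto.
  - right; right; right; left. destruct H as [Ht [u [Hu H]]]. split; auto. exists u.
    intuition.
  - right; right; right; right; left. destruct H as [Ht [Hx [[H1 H2]|[H1 [u [Hu H]]]]]]; split; auto; split; auto.
    right. split; auto. exists u. intuition.
  - right; right; right; right; right. destruct H as [Ht [H1 H2]]. split; auto. split; auto.
    intros m Hm. destruct (H2 m Hm) as [u Hu]. exists u. intuition.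
Qed.

Ltac ite_cases :=
  unfold ite; repeat match goal with
  | |- context [eqn ?a ?b] => let E := fresh in destruct (Nat.eqb_spec a b) as [E|E];
      unfold eqn, b2n at 1; [rewrite (proj2 (Nat.eqb_eq a b) E) | rewrite (proj2 (Nat.eqb_neq a b) E)]
  end.

Lemma justF_spec C i pc xc y :
  justF C i pc xc y <> 0 <-> justP (fun u => exists j, j < i /\ nthc C j = u) pc xc y.
Proof.
  set (Ear := fun u => exists j, j < i /\ nthc C j = u).
  assert (HE : forall P : nat -> Prop, (exists j, j < i /\ P (nthc C j)) <-> exists u, Ear u /\ P u).
  { intros P; split. intros [j [Hj HP]]. exists (nthc C j). split; auto. exists j; auto.
    intros [u [[j [Hj <-]] HP]]. exists j; auto. }
  unfold justF, justP.
  destruct (Nat.eq_dec (p1 pc) 0) as [E0|E0].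
  { rewrite E0. unfold eqn at 1, b2n. simpl. unfold jz. rewrite eqn_spec. intuition lia. }
  assert (Hn : eqn (p1 pc) 0 = 0) by (unfold eqn, b2n; destruct (Nat.eqb_spec (p1 pc) 0); lia).
  rewrite Hn. simpl ite.
  destruct (Nat.eq_dec (p1 pc) 1) as [E1|E1].
  { rewrite E1. simpl. unfold js. rewrite andn_spec, notn_spec', eqn_spec, eqn_spec. intuition lia. }
  assert (Hn1 : eqn (p1 pc) 1 = 0) by (unfold eqn, b2n; destruct (Nat.eqb_spec (p1 pc) 1); lia).
  rewrite Hn1. simpl ite.
  destruct (Nat.eq_dec (p1 pc) 2) as [E2|E2].
  { rewrite E2. simpl. unfold jp. rewrite andn_spec, ltn_spec, eqn_spec. intuition lia. }
  assert (Hn2 : eqn (p1 pc) 2 = 0) by (unfold eqn, b2n; destruct (Nat.eqb_spec (p1 pc) 2); lia).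
  rewrite Hn2. simpl ite.
  destruct (Nat.eq_dec (p1 pc) 3) as [E3|E3].
  { rewrite E3. simpl. unfold jc. rewrite bex_spec'.
    split.
    - intros [j [Hj H]]. rewrite !andn_spec, !eqn_spec, ball_spec' in H.
      right; right; right; left. split; auto. exists (nthc C j). split. exists j; auto.
      destruct H as [[H1 H2] [H3 H4]]. repeat split; auto.
      intros m Hm. specialize (H4 m Hm). apply earl_spec in H4. auto.
    - intros [H|[H|[H|[H|[H|H]]]]]; try lia.
      destruct H as [_ [u [[j [Hj <-]] [H1 [H2 [H3 H4]]]]]].
      exists j. split; auto. rewrite !andn_spec, !eqn_spec, ball_spec'. repeat split; auto.
      intros m Hm. apply earl_spec. apply H4; auto. }
  assert (Hn3 : eqn (p1 pc) 3 = 0) by (unfold eqn, b2n; destruct (Nat.eqb_spec (p1 pc) 3); lia).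
  rewrite Hn3. simpl ite.
  destruct (Nat.eq_dec (p1 pc) 4) as [E4|E4].
  { rewrite E4. simpl. unfold jr. rewrite andn_spec, notn_spec', eqn_spec.
    split.
    - intros [Hx H]. right; right; right; right; left. split; auto. split; auto.
      destruct (hdc xc) eqn:Eh; simpl in H.
      + left. split; auto. apply earl_spec in H. auto.
      + right. split; auto. apply bex_spec' in H. destruct H as [j [Hj H]].
        rewrite !andn_spec, !eqn_spec, earl_spec in H. destruct H as [[H1 H2] H3].
        exists (nthc C j). split. exists j; auto. repeat split; auto.
    - intros [H|[H|[H|[H|[H|H]]]]]; try lia.
      destruct H as [_ [Hx H]]. split; auto.
      destruct H as [[Hh H]|[Hh [u [[j [Hj <-]] [H1 [H2 H3]]]]]].
      + rewrite Hh. simpl. apply earl_spec. auto.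
      + destruct (hdc xc) eqn:Eh; [lia|]. simpl. apply bex_spec'. exists j. split; auto.
        rewrite !andn_spec, !eqn_spec, earl_spec. repeat split; auto. }
  assert (Hn4 : eqn (p1 pc) 4 = 0) by (unfold eqn, b2n; destruct (Nat.eqb_spec (p1 pc) 4); lia).
  rewrite Hn4. simpl ite.
  destruct (Nat.eq_dec (p1 pc) 5) as [E5|E5].
  { rewrite E5. simpl. unfold jm. rewrite andn_spec, earl_spec, ball_spec'.
    split.
    - intros [H1 H2]. right; right; right; right; right. split; auto. split; auto.
      intros m Hm. specialize (H2 m Hm). apply bex_spec' in H2. destruct H2 as [j [Hj H]].
      rewrite !andn_spec, !eqn_spec, notn_spec', eqn_spec in H. destruct H as [[H3 H4] H5].
      exists (nthc C j). split. exists j; auto. repeat split; auto.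
    - intros [H|[H|[H|[H|[H|H]]]]]; try lia.
      destruct H as [_ [H1 H2]]. split; auto. intros m Hm. destruct (H2 m Hm) as [u [[j [Hj <-]] [H3 [H4 H5]]]].
      apply bex_spec'. exists j. split; auto. rewrite !andn_spec, !eqn_spec, notn_spec', eqn_spec. auto. }
  assert (Hn5 : eqn (p1 pc) 5 = 0) by (unfold eqn, b2n; destruct (Nat.eqb_spec (p1 pc) 5); lia).
  rewrite Hn5. simpl ite. split; [lia|]. intros [H|[H|[H|[H|[H|H]]]]]; lia.
Qed.

Definition validL (L : list nat) : Prop :=
  forall i, i < length L ->
    justP (fun u => exists j, j < i /\ nth j L 0 = u) (fp (nth i L 0)) (fx (nth i L 0)) (fy (nth i L 0)).

Lemma valid_spec L : valid (encl L) <> 0 <-> validL L.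
Proof.
  unfold valid, validL. rewrite ball_spec', lenc_encl. split; intros H i Hi; specialize (H i Hi).
  - unfold just in H. apply justF_spec in H. rewrite !nthc_encl in H.
    eapply justP_mono; [|exact H]. intros u [j [Hj Hu]]. exists j. rewrite nthc_encl in Hu. auto.
  - unfold just. apply justF_spec. rewrite !nthc_encl.
    eapply justP_mono; [|exact H]. intros u [j [Hj Hu]]. exists j. rewrite nthc_encl. auto.
Qed.

Lemma fp_fct p xs y : fp (fct p xs y) = enc p.
Proof. unfold fp, fct. apply p1_pr. Qed.
Lemma fx_fct p xs y : fx (fct p xs y) = encl xs.
Proof. unfold fx, fct. rewrite p2_pr, p1_pr. auto. Qed.
Lemma fy_fct p xs y : fy (fct p xs y) = y.
Proof. unfold fy, fct. rewrite p2_pr, p2_pr. auto. Qed.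

Lemma evals_of_nth gs xs ys : length ys = length gs ->
  (forall m, m < length gs -> eval (nth m gs PZero) xs (nth m ys 0)) -> evals gs xs ys.
Proof.
  revert ys; induction gs as [|g gs IH]; intros [|y ys] Hl H; simpl in *; try lia.
  constructor. constructor.
  - apply (H 0). lia.
  - apply IH. lia. intros m Hm. apply (H (S m)). lia.
Qed.

Lemma nthc_map_enc gs m : m < length gs -> nthc (encl (map enc gs)) m = enc (nth m gs PZero).
Proof.
  intros Hm. rewrite nthc_encl. rewrite nth_indep with (d' := enc PZero).
  apply map_nth. rewrite length_map; auto.
Qed.

Lemma consc_encl x l : consc x (encl l) = encl (x :: l).
Proof. reflexivity. Qed.

Lemma hdc_encl x l : hdc (encl (x :: l)) = x.
Proof. apply hdc_cons. Qed.
Lemma tlc_encl x l : tlc (encl (x :: l)) = encl l.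
Proof. apply tlc_cons. Qed.

Lemma sound L : validL L -> forall i, i < length L -> forall p xs,
  fp (nth i L 0) = enc p -> fx (nth i L 0) = encl xs -> eval p xs (fy (nth i L 0)).
Proof.
  intros HV i. induction i as [i IH] using (well_founded_induction lt_wf).
  intros Hi p xs Hp Hx. pose proof (HV i Hi) as HJ. rewrite Hp, Hx in HJ.
  set (y := fy (nth i L 0)) in *. clearbody y.
  assert (IH' : forall u, (exists j, j < i /\ nth j L 0 = u) -> forall p xs,
            fp u = enc p -> fx u = encl xs -> eval p xs (fy u)).
  { intros u [j [Hj <-]]. apply IH; auto. lia. }
  clear IH HV Hp Hx.
  set (Ear := fun u => exists j, j < i /\ nth j L 0 = u) in *.
  unfold justP in HJ.
  destruct p as [| |n|f gs|f g|f]; simpl enc in HJ; rewrite ?p1_pr, ?p2_pr in HJ.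
  - destruct HJ as [[_ ->]|HJ]. constructor. lia.
  - destruct HJ as [HJ|[[_ [Hx ->]]|HJ]]; try lia.
    destruct xs as [|x xs]. simpl in Hx; lia. rewrite hdc_encl. constructor.

  - destruct HJ as [HJ|[HJ|[[_ [Hn ->]]|HJ]]]; try lia.
    rewrite lenc_encl in Hn. rewrite nthc_encl. constructor. apply nth_error_nth'; auto.

  - destruct HJ as [HJ|[HJ|[HJ|[[_ [u [Hu [H1 [H2 [H3 H4]]]]]]|HJ]]]]; try lia.

    rewrite ?p1_pr in H1. rewrite ?p2_pr in H3, H4. rewrite lenc_encl, length_map in H3, H4.
    destruct (encl_surj (fx u)) as [ys Hys].
    rewrite <- Hys, lenc_encl in H3.
    apply ev_comp with ys.
    + apply evals_of_nth; auto. intros m Hm.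
      specialize (H4 m Hm). rewrite nthc_map_enc in H4 by auto.
      rewrite <- Hys, nthc_encl in H4.
      pose proof (IH' _ H4 (nth m gs PZero) xs) as HH. unfold fp, fx, fy in HH. repeat (rewrite p1_pr in HH || rewrite p2_pr in HH). apply HH; auto.
    + rewrite <- H2. apply IH'; auto.
  - destruct HJ as [HJ|[HJ|[HJ|[HJ|[[_ [Hx H]]|HJ]]]]]; try lia.

    destruct xs as [|n xs]. simpl in Hx; lia.
    rewrite hdc_encl, tlc_encl in H.
    destruct H as [[Hn H]|[Hn [u [Hu [H1 [H2 H3]]]]]].
    + subst n. rewrite p1_pr in H. constructor.
      pose proof (IH' _ H f xs) as HH. unfold fp, fx, fy in HH. repeat (rewrite p1_pr in HH || rewrite p2_pr in HH). apply HH; auto.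
    + destruct n as [|n]; [lia|]. simpl pred in *.
      rewrite consc_encl in H2. rewrite consc_encl, consc_encl in H3.
      apply ev_primS with (fy u).
      * apply IH'; auto.
      * pose proof (IH' _ H3 g (n :: fy u :: xs)) as HH. unfold fp, fx, fy in HH. repeat (rewrite p1_pr in HH || rewrite p2_pr in HH). apply HH; auto.
  - destruct HJ as [HJ|[HJ|[HJ|[HJ|[HJ|[_ [H1 H2]]]]]]]; try lia.
    constructor.
    + rewrite consc_encl in H1. pose proof (IH' _ H1 f (y :: xs)) as HH. unfold fp, fx, fy in HH. repeat (rewrite p1_pr in HH || rewrite p2_pr in HH). apply HH; auto.
    + intros m Hm. destruct (H2 m Hm) as [u [Hu [H3 [H4 H5]]]].
      destruct (fy u) as [|k] eqn:Ek; [lia|]. exists k. rewrite <- Ek. apply IH'; auto.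
Qed.

Lemma validL_nil : validL [].
Proof. intros i Hi; simpl in Hi; lia. Qed.

Lemma validL_app L1 L2 : validL L1 -> validL L2 -> validL (L1 ++ L2).
Proof.
  intros H1 H2 i Hi. rewrite length_app in Hi.
  destruct (Nat.lt_ge_cases i (length L1)) as [Hl|Hl].
  - rewrite app_nth1 by auto. eapply justP_mono; [|apply H1; auto].
    intros u [j [Hj <-]]. exists j. split; auto. rewrite app_nth1; auto. lia.
  - rewrite app_nth2 by auto. eapply justP_mono; [|apply H2; lia].
    intros u [j [Hj <-]]. exists (length L1 + j). split. lia.
    rewrite app_nth2 by lia. f_equal. lia.
Qed.

Lemma validL_snoc L t : validL L -> justP (fun u => In u L) (fp t) (fx t) (fy t) -> validL (L ++ [t]).
Proof.
  intros H1 H2 i Hi. rewrite length_app in Hi. simpl in Hi.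
  destruct (Nat.lt_ge_cases i (length L)) as [Hl|Hl].
  - rewrite app_nth1 by auto. eapply justP_mono; [|apply H1; auto].
    intros u [j [Hj <-]]. exists j. split; auto. rewrite app_nth1; auto. lia.
  - assert (i = length L) by lia. subst i. rewrite nth_middle.
    eapply justP_mono; [|exact H2]. intros u Hu. apply In_nth with (d := 0) in Hu.
    destruct Hu as [j [Hj <-]]. exists j. split; auto. rewrite app_nth1; auto.
Qed.

Lemma collect (P : nat -> nat -> nat) n :
  (forall m, m < n -> exists k L, validL L /\ In (P m k) L) ->
  exists L, validL L /\ forall m, m < n -> exists k, In (P m k) L.
Proof.
  induction n; intros H.
  - exists []. split. apply validL_nil. intros; lia.
  - destruct IHn as [L [HL HL']]. intros m Hm; apply H; lia.
    destruct (H n (Nat.lt_succ_diag_r n)) as [k [L2 [HL2 HL2']]].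
    exists (L ++ L2). split. apply validL_app; auto.
    intros m Hm. destruct (Nat.eq_dec m n). subst. exists k. apply in_or_app; auto.
    destruct (HL' m ltac:(lia)) as [k' Hk']. exists k'. apply in_or_app; auto.
Qed.

Ltac jsimp := unfold justP; rewrite ?fp_fct, ?fx_fct, ?fy_fct; simpl enc;
  repeat (rewrite p1_pr || rewrite p2_pr).

Lemma complete : forall p xs y, eval p xs y -> exists L, validL L /\ In (fct p xs y) L.
Proof.
  apply (ev_ind2 (fun p xs y => exists L, validL L /\ In (fct p xs y) L)
                 (fun gs xs ys => exists L, validL L /\ forall m, m < length gs -> In (fct (nth m gs PZero) xs (nth m ys 0)) L)).
  - intros xs. exists ([] ++ [fct PZero xs 0]). split.
    + apply validL_snoc. apply validL_nil. jsimp. left; auto.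
    + apply in_or_app; simpl; auto.
  - intros x xs. exists ([] ++ [fct PSucc (x :: xs) (S x)]). split.
    + apply validL_snoc. apply validL_nil. jsimp. right; left. split; auto. split.
      simpl; lia. rewrite hdc_encl; auto.
    + apply in_or_app; simpl; auto.
  - intros i xs y Hy. exists ([] ++ [fct (PProj i) xs y]). split.
    + apply validL_snoc. apply validL_nil. jsimp. right; right; left. split; auto.
      rewrite lenc_encl, nthc_encl. split. apply nth_error_Some; congruence.
      symmetry. apply nth_error_nth; auto.
    + apply in_or_app; simpl; auto.
  - intros f gs xs ys y Hs [L1 [V1 I1]] Hf [L2 [V2 I2]].
    exists ((L1 ++ L2) ++ [fct (PComp f gs) xs y]). split.
    + apply validL_snoc. apply validL_app; auto. jsimp. right; right; right; left. split; auto.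
      exists (fct f ys y). rewrite fp_fct, fy_fct, fx_fct, !lenc_encl, length_map.
      pose proof (evals_length _ _ _ Hs) as Hl.
      split. apply in_or_app; auto. split; auto. split; auto. split; auto.
      intros m Hm. rewrite nthc_map_enc by auto. rewrite nthc_encl. apply in_or_app; left. apply I1; auto.
    + apply in_or_app; simpl; auto.
  - intros f g xs y Hf [L1 [V1 I1]].
    exists (L1 ++ [fct (PPrim f g) (0 :: xs) y]). split.
    + apply validL_snoc; auto. jsimp. right; right; right; right; left. split; auto.
      split. simpl; lia. left. rewrite hdc_encl, tlc_encl. split; auto.
    + apply in_or_app; simpl; auto.
  - intros f g n xs r y Hr [L1 [V1 I1]] Hg [L2 [V2 I2]].
    exists ((L1 ++ L2) ++ [fct (PPrim f g) (S n :: xs) y]). split.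
    + apply validL_snoc. apply validL_app; auto. jsimp. right; right; right; right; left. split; auto.
      split. simpl; lia. right. rewrite hdc_encl, tlc_encl. split; auto.
      exists (fct (PPrim f g) (n :: xs) r). rewrite fp_fct, fx_fct, fy_fct. simpl pred.
      split. apply in_or_app; auto. split. reflexivity. split. reflexivity.
      apply in_or_app; right. exact I2.
    + apply in_or_app; simpl; auto.
  - intros f xs n Hf [L0 [V0 I0]] Hl.
    destruct (collect (fun m k => fct f (m :: xs) (S k)) n) as [Lm [Vm Im]].
    { intros m Hm. destruct (Hl m Hm) as [k [_ [L [V I]]]]. exists k, L; auto. }
    exists ((L0 ++ Lm) ++ [fct (PMu f) xs n]). split.
    + apply validL_snoc. apply validL_app; auto. jsimp. right; right; right; right; right. split; auto.
      split. apply in_or_app; left. exact I0.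
      intros m Hm. destruct (Im m Hm) as [k Hk]. exists (fct f (m :: xs) (S k)).
      rewrite fp_fct, fx_fct, fy_fct. split. apply in_or_app; auto. repeat split; auto.
    + apply in_or_app; simpl; auto.
  - intros xs. exists []. split. apply validL_nil. simpl; intros; lia.
  - intros g gs xs y ys Hg [L1 [V1 I1]] Hs [L2 [V2 I2]].
    exists (L1 ++ L2). split. apply validL_app; auto.
    intros [|m] Hm; simpl. apply in_or_app; auto. apply in_or_app; right. apply I2. simpl in Hm; lia.
Qed.

Lemma chk_spec e C : chk e C <> 0 <-> valid C <> 0 /\ exists j, j < lenc C /\ fp (nthc C j) = e /\ fx (nthc C j) = consc e 0.
Proof.
  unfold chk. rewrite andn_spec, bex_spec'. split; intros [H1 [j [Hj H2]]]; split; auto; exists j; split; auto;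
  rewrite ?andn_spec, ?eqn_spec in *; auto.
Qed.

Definition halts (p : prog) (x : nat) : Prop := exists y, eval p [x] y.


Lemma halt_spec p : (exists C, chk (enc p) C <> 0) <-> halts p (enc p).
Proof.
  split.
  - intros [C HC]. apply chk_spec in HC. destruct HC as [HV [j [Hj [H1 H2]]]].
    destruct (encl_surj C) as [L <-]. apply valid_spec in HV. rewrite lenc_encl in Hj.
    rewrite nthc_encl in H1, H2. exists (fy (nth j L 0)). apply (sound L HV j Hj); auto.
  - intros [y Hy]. destruct (complete _ _ _ Hy) as [L [HV HI]].
    exists (encl L). apply chk_spec. split. apply valid_spec; auto.
    apply In_nth with (d := 0) in HI. destruct HI as [j [Hj Hn]].
    exists j. rewrite lenc_encl, nthc_encl, Hn, fp_fct, fx_fct. auto.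
Qed.

Ltac dm1 x k :=
  let q := fresh "q" in let r := fresh "r" in
  pose proof (Nat.div_mod_eq x k); pose proof (Nat.mod_upper_bound x k ltac:(lia));
  set (q := x / k) in *; set (r := x mod k) in *; clearbody q r.
Ltac dmall := repeat match goal with
 | H : context [?x / ?k] |- _ => dm1 x k
 | H : context [?x mod ?k] |- _ => dm1 x k
 | |- context [?x / ?k] => dm1 x k
 | |- context [?x mod ?k] => dm1 x k
 end.

Lemma cf_div : cf 2 (fun ys => nth 0 ys 0 / nth 1 ys 0).
Proof.
  apply cf_ext with (f := fun ys => ite (nth 1 ys 0) (bmin (S (nth 0 ys 0)) (fun q => ltn (nth 0 ys 0) (nth 1 ys 0 * q + nth 1 ys 0))) 0).
  - cfc.
  - intros ys _. set (x := nth 0 ys 0). set (k := nth 1 ys 0). clearbody x k.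
    destruct k as [|k]. reflexivity. simpl ite.
    set (P := fun q => ltn x (S k * q + S k)).
    assert (Hq : P (x / S k) <> 0).
    { unfold P. apply ltn_spec. pose proof (Nat.div_mod_eq x (S k)). pose proof (Nat.mod_upper_bound x (S k)). lia. }
    assert (Hz : forall j, j < x / S k -> P j = 0).
    { intros j Hj. unfold P. destruct (ltn x (S k * j + S k)) eqn:E; auto. exfalso.
      assert (ltn x (S k * j + S k) <> 0) by lia. apply ltn_spec in H.
      pose proof (Nat.div_mod_eq x (S k)). assert (S k * (j + 1) <= S k * (x / S k)) by (apply Nat.mul_le_mono_l; lia). lia. }
    assert (Hle : x / S k <= x) by (apply Nat.Div0.div_le_upper_bound; lia).
    pose proof (bmin_spec_lt (S x) P (x / S k) ltac:(lia) Hq).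
    destruct (Nat.eq_dec (bmin (S x) P) (x / S k)); auto.
    exfalso. assert (Hlt : bmin (S x) P < S x) by lia. apply bmin_found in Hlt.
    apply Hlt. apply Hz. lia.
Qed.
#[export] Hint Resolve cf_div : cfdb.

Lemma cf_mod : cf 2 (fun ys => nth 0 ys 0 mod nth 1 ys 0).
Proof.
  apply cf_ext with (f := fun ys => nth 0 ys 0 - nth 1 ys 0 * (nth 0 ys 0 / nth 1 ys 0)).
  - cfc.
  - intros ys _. set (x := nth 0 ys 0). set (k := nth 1 ys 0). clearbody x k.
    destruct k. cbn. lia. rewrite (Nat.Div0.mod_eq x (S k)) by lia. auto.
Qed.
#[export] Hint Resolve cf_mod : cfdb.

Lemma cset_of_cf (P : nat -> Prop) (f : list nat -> nat) : cf 1 f ->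
  (forall x, P x -> f [x] = 1) -> (forall x, ~ P x -> f [x] = 0) -> computable_set P.
Proof.
  intros [p Hp] H1 H0. exists p. intros x. split; intros H.
  - rewrite <- (H1 x H). apply Hp; auto.
  - rewrite <- (H0 x H). apply Hp; auto.
Qed.

Lemma crel_of_cf (R : nat -> nat -> Prop) (f : list nat -> nat) : cf 2 f ->
  (forall x y, R x y -> f [x; y] = 1) -> (forall x y, ~ R x y -> f [x; y] = 0) -> computable_rel R.
Proof.
  intros [p Hp] H1 H0. exists p. intros x y. split; intros H.
  - rewrite <- (H1 x y H). apply Hp; auto.
  - rewrite <- (H0 x y H). apply Hp; auto.
Qed.

Lemma orn_01 a b : orn a b = 0 \/ orn a b = 1.
Proof. unfold orn, ite. destruct a, b; auto. Qed.
Lemma andn_01 a b : andn a b = 0 \/ andn a b = 1.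
Proof. unfold andn, ite. destruct a, b; auto. Qed.
Lemma orn_spec a b : orn a b <> 0 <-> a <> 0 \/ b <> 0.
Proof. unfold orn, ite. destruct a, b; split; intros; auto; try lia. Qed.

(** The structure A: classes {3k, 3k+1} and singletons {3k+2}. *)
Definition EA (x y : nat) : Prop := x / 3 = y / 3 /\ (x = y \/ (x mod 3 < 2 /\ y mod 3 < 2)).
Definition A : structure := mkStructure (fun _ => True) EA (fun _ _ _ => conj I I).

Definition EAn (x y : nat) : nat :=
  andn (eqn (x / 3) (y / 3)) (orn (eqn x y) (andn (ltn (x mod 3) 2) (ltn (y mod 3) 2))).

Lemma EAn_spec x y : EAn x y <> 0 <-> EA x y.
Proof.
  unfold EAn, EA. rewrite andn_spec, eqn_spec, orn_spec, eqn_spec, andn_spec, !ltn_spec. tauto.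
Qed.

Lemma A_equiv : is_equivalence_structure A.
Proof.
  unfold is_equivalence_structure; simpl. unfold EA. split; [|split].
  - intros; auto.
  - intros x y [H1 H2]. split; auto. destruct H2 as [->|H2]; auto. right; tauto.
  - intros x y z [H1 H2] [H3 H4]. split. congruence. destruct H2 as [->|H2]; auto.
    destruct H4 as [<-|H4]; auto. right. tauto.
Qed.

Lemma A_computable : computable_structure A.
Proof.
  split.
  - apply (cset_of_cf _ (fun _ => 1)). apply cf_const. auto. simpl; tauto.
  - apply (crel_of_cf _ (fun ys => EAn (nth 0 ys 0) (nth 1 ys 0))).
    + unfold EAn. cfc.
    + simpl. intros x y H. apply EAn_spec in H. unfold EAn in *. destruct (andn_01 (eqn (x / 3) (y / 3))
         (orn (eqn x y) (andn (ltn (x mod 3) 2) (ltn (y mod 3) 2)))); lia.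
    + simpl. intros x y H. destruct (EAn x y) eqn:E; auto. exfalso. apply H. apply EAn_spec. lia.
Qed.

Lemma EA_form n r m s : r < 3 -> s < 3 ->
  (EA (3 * n + r) (3 * m + s) <-> n = m /\ (r = s \/ (r < 2 /\ s < 2))).
Proof.
  intros Hr Hs. unfold EA.
  assert (E1 : (3 * n + r) / 3 = n) by (dmall; lia).
  assert (E2 : (3 * m + s) / 3 = m) by (dmall; lia).
  assert (E3 : (3 * n + r) mod 3 = r) by (dmall; lia).
  assert (E4 : (3 * m + s) mod 3 = s) by (dmall; lia).
  rewrite E1, E2, E3, E4. split; intros [H1 H2]; split; auto; destruct H2; auto; left; lia.
Qed.

Lemma EA_pair n : EA (3 * n) (3 * n + 1).
Proof. unfold EA. split. dmall; lia. right. dmall; lia. Qed.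
Lemma EA_pair' n : EA (3 * n + 1) (3 * n).
Proof. unfold EA. split. dmall; lia. right. dmall; lia. Qed.

Fixpoint rk (P : nat -> Prop) (x : nat) : nat :=
  match x with
  | 0 => 0
  | S x => rk P x + (if excluded_middle_informative (P x) then 1 else 0)
  end.

Lemma rk_mono P x y : x <= y -> rk P x <= rk P y.
Proof. induction 1; simpl; auto. lia. Qed.

Lemma rk_SP P x : P x -> rk P (S x) = S (rk P x).
Proof. intros H; simpl. destruct (excluded_middle_informative (P x)); [lia|tauto]. Qed.

Lemma rk_inj P x y : P x -> P y -> rk P x = rk P y -> x = y.
Proof.
  intros Hx Hy E. destruct (Nat.lt_trichotomy x y) as [H|[H|H]]; auto; exfalso.
  - pose proof (rk_mono P (S x) y H). rewrite rk_SP in H0; auto. lia.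
  - pose proof (rk_mono P (S y) x H). rewrite rk_SP in H0; auto. lia.
Qed.

Lemma rk_surj P : (forall N, exists x, N <= x /\ P x) -> forall n, exists x, P x /\ rk P x = n.
Proof.
  intros Hinf.
  assert (Hub : forall n, exists z, n <= rk P z).
  { induction n. exists 0; lia. destruct IHn as [z Hz]. destruct (Hinf z) as [x [Hx Px]].
    exists (S x). rewrite rk_SP; auto. pose proof (rk_mono P z x Hx). lia. }
  assert (Hcross : forall n z, S n <= rk P z -> exists y, P y /\ rk P y = n).
  { intros n z. induction z; simpl; intros H. lia.
    destruct (excluded_middle_informative (P z)).
    - destruct (Nat.eq_dec (rk P z) n). exists z; auto. apply IHz. lia.
    - apply IHz. lia. }
  intros n. destruct (Hub (S n)) as [z Hz]. eauto.
Qed.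

Section IsoA.
Variable S : structure.
Hypothesis Huniv : forall x, univ S x.
Hypothesis Hrefl : forall x, E S x x.
Hypothesis Hsym : forall x y, E S x y -> E S y x.
Hypothesis Htrans : forall x y z, E S x y -> E S y z -> E S x z.
Hypothesis Hno3 : forall a b c, E S a b -> E S a c -> a <> b -> a <> c -> b <> c -> False.

Definition sng (x : nat) : Prop := forall y, E S x y -> y = x.
Definition lo (x : nat) : Prop := exists y, x < y /\ E S x y.
Definition hi (x : nat) : Prop := exists y, y < x /\ E S x y.

Hypothesis Hinf_s : forall N, exists x, N <= x /\ sng x.
Hypothesis Hinf_l : forall N, exists x, N <= x /\ lo x.


Definition ptn (x : nat) : nat := epsilon (inhabits 0) (fun y => y < x /\ E S x y).

Lemma ptn_spec x : hi x -> ptn x < x /\ E S x (ptn x).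
Proof. intros H. unfold ptn. apply (epsilon_spec (inhabits 0) (fun y => y < x /\ E S x y)). exact H. Qed.

Lemma classify x : sng x \/ lo x \/ hi x.
Proof.
  destruct (classic (sng x)) as [H|H]; auto. right.
  apply not_all_ex_not in H. destruct H as [y Hy].
  destruct (classic (E S x y)) as [Hxy|Hxy]; [|tauto].
  assert (y <> x) by tauto.
  destruct (Nat.lt_trichotomy y x) as [Hl|[Hl|Hl]]; [right|lia|left]; exists y; auto.
Qed.

Lemma sng_lo x : sng x -> lo x -> False.
Proof. intros Hs [y [Hy E]]. apply Hs in E. lia. Qed.
Lemma sng_hi x : sng x -> hi x -> False.
Proof. intros Hs [y [Hy E]]. apply Hs in E. lia. Qed.
Lemma lo_hi x : lo x -> hi x -> False.
Proof. intros [y [Hy E]] [z [Hz E']]. apply (Hno3 x y z); auto; lia. Qed.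

Lemma hi_ptn_lo x : hi x -> lo (ptn x).
Proof. intros H. destruct (ptn_spec x H). exists x. split; auto. Qed.

Lemma ptn_uniq x y : y < x -> E S x y -> ptn x = y.
Proof.
  intros Hy E. assert (Hh : hi x) by (exists y; auto). destruct (ptn_spec x Hh) as [H1 H2].
  destruct (Nat.eq_dec (ptn x) y); auto. exfalso. apply (Hno3 x (ptn x) y); auto; lia.
Qed.

Definition fiso (x : nat) : nat :=
  if excluded_middle_informative (sng x) then 3 * rk sng x + 2
  else if excluded_middle_informative (lo x) then 3 * rk lo x
  else 3 * rk lo (ptn x) + 1.

Lemma fiso_sng x : sng x -> fiso x = 3 * rk sng x + 2.
Proof. intros H. unfold fiso. destruct (excluded_middle_informative (sng x)); tauto. Qed.
Lemma fiso_lo x : lo x -> fiso x = 3 * rk lo x.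
Proof.
  intros H. unfold fiso. destruct (excluded_middle_informative (sng x)).
  exfalso; eapply sng_lo; eauto. destruct (excluded_middle_informative (lo x)); tauto.
Qed.
Lemma fiso_hi x : hi x -> fiso x = 3 * rk lo (ptn x) + 1.
Proof.
  intros H. unfold fiso. destruct (excluded_middle_informative (sng x)).
  exfalso; eapply sng_hi; eauto. destruct (excluded_middle_informative (lo x)).
  exfalso; eapply lo_hi; eauto. auto.
Qed.

Lemma fiso_inj x y : fiso x = fiso y -> x = y.
Proof.
  intros E.
  destruct (classify x) as [Hx|[Hx|Hx]]; destruct (classify y) as [Hy|[Hy|Hy]];
  rewrite ?(fiso_sng _ Hx), ?(fiso_lo _ Hx), ?(fiso_hi _ Hx), ?(fiso_sng _ Hy), ?(fiso_lo _ Hy), ?(fiso_hi _ Hy) in E;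
  try lia.
  - apply (rk_inj sng); auto. lia.
  - apply (rk_inj lo); auto. lia.
  - assert (ptn x = ptn y). apply (rk_inj lo); auto using hi_ptn_lo. lia.
    destruct (ptn_spec x Hx), (ptn_spec y Hy). destruct (Nat.eq_dec x y); auto. exfalso.
    apply (Hno3 (ptn x) x y); auto; try lia. rewrite H; auto.
Qed.

Lemma fiso_iso : isomorphism S A fiso.
Proof.
  split; [split; [|split]|].
  - intros; simpl; auto.
  - intros x y _ _; apply fiso_inj.
  - intros x y _ _. simpl. split.
    + intros Exy. destruct (Nat.eq_dec x y) as [<-|Hne].
      { split; auto. }
      destruct (Nat.lt_trichotomy x y) as [Hl|[Hl|Hl]]; [|lia|].
      * assert (Hlx : lo x) by (exists y; auto). assert (Hhy : hi y) by (exists x; auto).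
        rewrite (fiso_lo _ Hlx), (fiso_hi _ Hhy), (ptn_uniq y x Hl (Hsym _ _ Exy)).
        apply EA_pair.
      * assert (Hly : lo y) by (exists x; auto). assert (Hhx : hi x) by (exists y; auto).
        rewrite (fiso_lo _ Hly), (fiso_hi _ Hhx), (ptn_uniq x y Hl Exy).
        apply EA_pair'.
    + intros HE. destruct (Nat.eq_dec x y) as [<-|Hne]; auto.
      assert (Hf : fiso x <> fiso y) by (intros H; apply fiso_inj in H; auto).
      destruct (classify x) as [Hx|[Hx|Hx]]; destruct (classify y) as [Hy|[Hy|Hy]];
      rewrite ?(fiso_sng _ Hx), ?(fiso_lo _ Hx), ?(fiso_hi _ Hx), ?(fiso_sng _ Hy), ?(fiso_lo _ Hy), ?(fiso_hi _ Hy) in HE, Hf;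
      try (exfalso; unfold EA in HE; dmall; lia).
      * assert (HE' : rk lo x = rk lo (ptn y)) by (clear -HE; unfold EA in HE; dmall; lia).
        apply (rk_inj lo) in HE'; auto using hi_ptn_lo. destruct (ptn_spec y Hy). subst. auto.
      * assert (HE' : rk lo (ptn x) = rk lo y) by (clear -HE; unfold EA in HE; dmall; lia).
        apply (rk_inj lo) in HE'; auto using hi_ptn_lo. destruct (ptn_spec x Hx). subst. auto.
  - intros v _. 
    assert (Hv : v = 3 * (v / 3) + v mod 3) by (dmall; lia).
    assert (Hr : v mod 3 < 3) by (apply Nat.mod_upper_bound; lia).
    set (n := v / 3) in *. set (r := v mod 3) in *. clearbody n r. subst v.
    destruct (rk_surj lo Hinf_l n) as [x [Hx Hxn]].
    destruct r as [|[|[|r]]]; try lia.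
    + exists x. split. simpl; auto. rewrite fiso_lo by auto. lia.
    + destruct Hx as [y [Hy Exy]]. assert (Hhy : hi y) by (exists x; split; auto).
      exists y. split. simpl; auto. rewrite fiso_hi by auto. rewrite (ptn_uniq y x Hy (Hsym _ _ Exy)). lia.
    + destruct (rk_surj sng Hinf_s n) as [z [Hz Hzn]].
      exists z. split. simpl; auto. rewrite fiso_sng by auto. lia.
Qed.
End IsoA.

Definition Mn (e k : nat) : nat :=
  andn (eqn (p1 k) e) (andn (chk e (p2 k)) (ball (p2 k) (fun c => notn (chk e c)))).
Lemma cf_Mn : cf 2 (fun ys => Mn (nth 0 ys 0) (nth 1 ys 0)).
Proof. unfold Mn; cfc. Qed.
#[export] Hint Resolve cf_Mn : cfdb.

Definition EBn (x y : nat) : nat :=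
  orn (eqn x y)
  (orn (andn (eqn (x / 5) (y / 5)) (andn (ltn (x mod 5) 2) (ltn (y mod 5) 2)))
  (orn (andn (andn (eqn (x mod 5) 3) (eqn (y mod 5) 4)) (Mn (x / 5) (y / 5)))
       (andn (andn (eqn (x mod 5) 4) (eqn (y mod 5) 3)) (Mn (y / 5) (x / 5))))).
Lemma cf_EBn : cf 2 (fun ys => EBn (nth 0 ys 0) (nth 1 ys 0)).
Proof. unfold EBn; cfc. Qed.

Definition EB (x y : nat) : Prop := EBn x y <> 0.
Definition Bnc : structure := mkStructure (fun _ => True) EB (fun _ _ _ => conj I I).

Definition MP (e k : nat) : Prop := p1 k = e /\ chk e (p2 k) <> 0 /\ forall c, c < p2 k -> chk e c = 0.

Lemma Mn_spec e k : Mn e k <> 0 <-> MP e k.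
Proof.
  unfold Mn, MP. rewrite andn_spec, eqn_spec, andn_spec, ball_spec'.
  split; intros [H1 [H2 H3]]; repeat split; auto.
  - intros c Hc. specialize (H3 c Hc). apply notn_spec' in H3. lia.
  - intros c Hc. apply notn_spec'. specialize (H3 c Hc). lia.
Qed.

Lemma EB_spec x y : EB x y <-> x = y \/ (x / 5 = y / 5 /\ x mod 5 < 2 /\ y mod 5 < 2) \/
   (x mod 5 = 3 /\ y mod 5 = 4 /\ MP (x / 5) (y / 5)) \/ (x mod 5 = 4 /\ y mod 5 = 3 /\ MP (y / 5) (x / 5)).
Proof.
  unfold EB, EBn. rewrite !orn_spec, !andn_spec, !eqn_spec, !ltn_spec, !Mn_spec. tauto.
Qed.

Lemma MP_uniq e k k' : MP e k -> MP e k' -> k = k'.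
Proof.
  intros [H1 [H2 H3]] [H1' [H2' H3']].
  assert (p2 k = p2 k').
  { destruct (Nat.lt_trichotomy (p2 k) (p2 k')) as [H|[H|H]]; auto.
    apply H3' in H; congruence. apply H3 in H; congruence. }
  rewrite <- (pr_p1p2 k), <- (pr_p1p2 k'). congruence.
Qed.

Lemma MP_e e e' k : MP e k -> MP e' k -> e = e'.
Proof. intros [H1 _] [H2 _]. congruence. Qed.

Lemma least_ex (P : nat -> Prop) : (exists n, P n) -> exists n, P n /\ forall m, m < n -> ~ P m.
Proof.
  intros [n Hn]. apply NNPP. intros Hno.
  assert (forall k, forall m, m <= k -> ~ P m).
  { induction k; intros m Hm HP; apply Hno; exists m; split; auto; intros m' Hm' HP'.
    - lia.
    - apply (IHk m'); auto. lia. }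
  apply (H n n); auto.
Qed.

Lemma MP_exists e : (exists C, chk e C <> 0) <-> exists k, MP e k.
Proof.
  split.
  - intros H. destruct (least_ex _ H) as [C [HC Hl]]. exists (pr e C).
    unfold MP. rewrite p1_pr, p2_pr. repeat split; auto.
    intros c Hc. specialize (Hl c Hc). lia.
  - intros [k [_ [H _]]]. eauto.
Qed.

Lemma B_refl x : EB x x.
Proof. apply EB_spec; auto. Qed.

Lemma B_sym x y : EB x y -> EB y x.
Proof. rewrite !EB_spec. intros [H|[H|[H|H]]]; [left|right;left|right;right;right|right;right;left]; intuition. Qed.

Lemma B_trans x y z : EB x y -> EB y z -> EB x z.
Proof.
  intros H1 H2. pose proof H1 as H1'. pose proof H2 as H2'. rewrite EB_spec in H1, H2.
  destruct H1 as [<-|H1]; auto. destruct H2 as [<-|H2]; auto.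
  apply EB_spec.
  destruct H1 as [H1|[H1|H1]]; destruct H2 as [H2|[H2|H2]]; try (exfalso; lia).
  - right; left. lia.
  - left. destruct H1 as [Hx [Hy M1]], H2 as [Hy' [Hz M2]].
    pose proof (MP_e _ _ _ M1 M2). dmall. lia.
  - left. destruct H1 as [Hx [Hy M1]], H2 as [Hy' [Hz M2]].
    pose proof (MP_uniq _ _ _ M1 M2). dmall. lia.
Qed.

Lemma B_no3 a b c : EB a b -> EB a c -> a <> b -> a <> c -> b <> c -> False.
Proof.
  rewrite !EB_spec. intros H1 H2 Hab Hac Hbc.
  destruct H1 as [H1|[H1|[H1|H1]]]; [lia| | |]; destruct H2 as [H2|[H2|[H2|H2]]]; try lia.
  - dmall. lia.
  - destruct H1 as [Ha [Hb M1]], H2 as [Ha' [Hc M2]]. pose proof (MP_uniq _ _ _ M1 M2). dmall. lia.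
  - destruct H1 as [Ha [Hb M1]], H2 as [Ha' [Hc M2]]. pose proof (MP_e _ _ _ M1 M2). dmall. lia.
Qed.

Lemma B_computable : computable_structure Bnc.
Proof.
  split.
  - apply (cset_of_cf _ (fun _ => 1)). apply cf_const. auto. simpl; tauto.
  - apply (crel_of_cf _ (fun ys => EBn (nth 0 ys 0) (nth 1 ys 0))).
    + apply cf_EBn.
    + simpl. intros x y H. unfold EB, EBn in *. 
      match goal with |- orn ?a ?b = 1 => destruct (orn_01 a b) end; lia.
    + simpl. intros x y H. unfold EB in H. lia.
Qed.

Lemma B_iso : isomorphic Bnc A.
Proof.
  exists (fiso Bnc). apply fiso_iso.
  - simpl; auto.
  - apply B_refl.
  - apply B_sym.
  - apply B_no3.
  - intros N. exists (5 * N + 2). split. lia. intros y Hy. simpl in Hy.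
    apply EB_spec in Hy. destruct Hy as [Hy|[Hy|[Hy|Hy]]]; auto; exfalso; dmall; lia.
  - intros N. exists (5 * N). split. lia. exists (5 * N + 1). split. lia. simpl.
    apply EB_spec. right; left. dmall; lia.
Qed.

Lemma sng_B e : (forall y, EB (5 * e + 3) y -> y = 5 * e + 3) <-> ~ exists k, MP e k.
Proof.
  split.
  - intros H [k Hk]. assert (EB (5 * e + 3) (5 * k + 4)).
    { apply EB_spec. right; right; left.
      assert (E1 : (5 * e + 3) / 5 = e) by (dmall; lia).
      assert (E2 : (5 * k + 4) / 5 = k) by (dmall; lia).
      rewrite E1, E2. split. dmall; lia. split. dmall; lia. auto. }
    apply H in H0. lia.
  - intros H y Hy. apply EB_spec in Hy. destruct Hy as [Hy|[Hy|[Hy|Hy]]]; auto; try (exfalso; dmall; lia).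
    exfalso. apply H. exists (y / 5). destruct Hy as [_ [_ Hy]].
    assert (E1 : (5 * e + 3) / 5 = e) by (dmall; lia). rewrite E1 in Hy. auto.
Qed.

Lemma EA_other v : v mod 3 <> 2 -> EA v (3 * (v / 3) + (1 - v mod 3)) /\ 3 * (v / 3) + (1 - v mod 3) <> v.
Proof.
  intros Hn. unfold EA. 
  assert (E1 : (3 * (v / 3) + (1 - v mod 3)) / 3 = v / 3).
  { rewrite Nat.mul_comm, Nat.div_add_l by lia. rewrite (Nat.div_small (1 - v mod 3)). lia. pose proof (Nat.mod_upper_bound v 3). lia. }
  assert (E2 : (3 * (v / 3) + (1 - v mod 3)) mod 3 = 1 - v mod 3).
  { rewrite Nat.add_comm, Nat.mul_comm, Nat.Div0.mod_add. apply Nat.mod_small. lia. }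
  rewrite E1, E2. pose proof (Nat.mod_upper_bound v 3). pose proof (Nat.div_mod_eq v 3).
  repeat split; try lia.
Qed.

Lemma not_cc : ~ computably_categorical A.
Proof.
  intros [_ H]. destruct (H Bnc B_computable B_iso) as [h [[ph Hph] Hiso]].
  assert (Hh : cf 1 (fun ys => h (nth 0 ys 0))).
  { exists ph. intros [|x [|]] Hl; simpl in Hl; try lia. apply Hph. }
  assert (HQ : cf 1 (fun ys => 1 - eqn (h (5 * nth 0 ys 0 + 3) mod 3) 2)).
  { cfc. }
  destruct HQ as [q Hq].
  set (Q := fun e => 1 - eqn (h (5 * e + 3) mod 3) 2).
  assert (Hq' : forall e, eval q [e] (Q e)) by (intros e; apply (Hq [e]); auto).
  set (d := PMu (PComp q [PProj 1])).
  set (e0 := enc d).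
  assert (H1 : halts d e0 <-> Q e0 = 0).
  { split.
    - intros [y Hy]. inversion Hy as [| | | | | |f xs n Hz Hlt]; subst.
      inversion Hz as [| | |f' gs' xs' ys' y'' Hs Hf| | |]; subst.
      inversion Hs as [|g gs xs0 y0 ys0 Hg Hs']; subst.
      inversion Hs'; subst. inversion Hg as [| |i' xs1 y1 Hn| | | |]; subst. simpl in Hn. injection Hn as <-.
      symmetry. eapply eval_det; eauto.
    - intros HQ0. exists 0. constructor.
      + econstructor. constructor. constructor. reflexivity. constructor. rewrite <- HQ0. auto.
      + intros; lia. }
  assert (H2 : halts d e0 <-> exists k, MP e0 k).
  { rewrite <- MP_exists. unfold e0. rewrite halt_spec. tauto. }
  assert (H3 : (forall y, EB (5 * e0 + 3) y -> y = 5 * e0 + 3) <-> h (5 * e0 + 3) mod 3 = 2).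
  { destruct Hiso as [[_ [Hinj HE]] Hsurj]. simpl in Hinj, HE, Hsurj. clearbody e0.
    set (x := 5 * e0 + 3). split.
    - intros Hs. destruct (Nat.eq_dec (h x mod 3) 2) as [|Hn]; auto. exfalso.
      destruct (EA_other (h x) Hn) as [Hv Hne].
      destruct (Hsurj (3 * (h x / 3) + (1 - h x mod 3)) I) as [z [_ Hz]].
      rewrite <- Hz in Hv. apply HE in Hv; auto. apply Hs in Hv. subst z. auto.
    - intros Hm y Hy. apply HE in Hy; auto. unfold EA in Hy. destruct Hy as [Hy1 [Hy2|Hy2]].
      + apply Hinj; auto.
      + lia. }
  assert (H4 : Q e0 = 0 <-> h (5 * e0 + 3) mod 3 = 2).
  { unfold Q. unfold eqn, b2n. destruct (Nat.eqb_spec (h (5 * e0 + 3) mod 3) 2); split; intros; lia. }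
  rewrite sng_B in H3. tauto.
Qed.

Lemma A_no3 u v w : EA u v -> EA u w -> u <> v -> u <> w -> v <> w -> False.
Proof. unfold EA. intros. dmall. lia. Qed.

Lemma EA_refl u : EA u u.
Proof. split; auto. Qed.
Lemma EA_sym u v : EA u v -> EA v u.
Proof. unfold EA. intros [H1 H2]. split; auto. destruct H2; auto. right; tauto. Qed.
Lemma EA_trans u v w : EA u v -> EA v w -> EA u w.
Proof. unfold EA. intros [H1 H2] [H3 H4]. split. congruence. destruct H2 as [->|H2]; auto. destruct H4 as [<-|H4]; auto. right; tauto. Qed.

Section CBEC.
Variable B : structure.
Variable pU pE : prog.
Hypothesis HU : forall x, (univ B x -> eval pU [x] 1) /\ (~ univ B x -> eval pU [x] 0).
Hypothesis HE : forall x y, (E B x y -> eval pE [x; y] 1) /\ (~ E B x y -> eval pE [x; y] 0).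
Variable g : nat -> nat.
Hypothesis Hg : embedding A B g.
Variable g' : nat -> nat.
Hypothesis Hg' : embedding B A g'.

Definition uB (x : nat) : nat := if excluded_middle_informative (univ B x) then 1 else 0.
Definition eB (x y : nat) : nat := if excluded_middle_informative (E B x y) then 1 else 0.

Lemma cf_uB : cf 1 (fun ys => uB (nth 0 ys 0)).
Proof.
  exists pU. intros [|x [|]] Hl; simpl in Hl; try lia. simpl. unfold uB.
  destruct (excluded_middle_informative (univ B x)); apply HU; auto.
Qed.
Lemma cf_eB : cf 2 (fun ys => eB (nth 0 ys 0) (nth 1 ys 0)).
Proof.
  exists pE. intros [|x [|y [|]]] Hl; simpl in Hl; try lia. simpl. unfold eB.
  destruct (excluded_middle_informative (E B x y)); apply HE; auto.
Qed.
#[local] Hint Resolve cf_uB cf_eB : cfdb.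

Lemma uB_spec x : uB x <> 0 <-> univ B x.
Proof. unfold uB. destruct (excluded_middle_informative (univ B x)); split; intros; auto; lia. Qed.
Lemma eB_spec x y : eB x y <> 0 <-> E B x y.
Proof. unfold eB. destruct (excluded_middle_informative (E B x y)); split; intros; auto; lia. Qed.

Lemma Bu x y : E B x y -> univ B x /\ univ B y.
Proof. apply E_in_univ. Qed.

Lemma B_E_iff x y : univ B x -> univ B y -> (E B x y <-> EA (g' x) (g' y)).
Proof. intros. destruct Hg' as [_ [_ H3]]. apply (H3 x y); auto. Qed.

Lemma Brefl x : univ B x -> E B x x.
Proof. intros. apply B_E_iff; auto. apply EA_refl. Qed.
Lemma Bsym x y : E B x y -> E B y x.
Proof. intros H. destruct (Bu _ _ H). apply B_E_iff; auto. apply EA_sym. apply B_E_iff; auto. Qed.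
Lemma Btrans x y z : E B x y -> E B y z -> E B x z.
Proof.
  intros H1 H2. destruct (Bu _ _ H1), (Bu _ _ H2). apply B_E_iff; auto.
  apply EA_trans with (g' y); apply B_E_iff; auto.
Qed.
Lemma Bno3 a b c : E B a b -> E B a c -> a <> b -> a <> c -> b <> c -> False.
Proof.
  intros H1 H2 Hab Hac Hbc. destruct (Bu _ _ H1), (Bu _ _ H2).
  destruct Hg' as [_ [Hinj _]].
  apply (A_no3 (g' a) (g' b) (g' c)); try (apply B_E_iff; auto); intros E; apply Hinj in E; auto.
Qed.

Definition PB (x y : nat) : nat := andn (uB y) (eB y x).
Definition fBA (x : nat) : nat :=
  ite (bex x (fun y => PB x y)) (3 * bmin x (fun y => PB x y) + 1) (3 * x).

Lemma cf_fBA : cf 1 (fun ys => fBA (nth 0 ys 0)).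
Proof. unfold fBA, PB. cfc. Qed.

Lemma PB_spec x y : PB x y <> 0 <-> univ B y /\ E B y x.
Proof. unfold PB. rewrite andn_spec, uB_spec, eB_spec. tauto. Qed.

Lemma fBA_cases x :
  (fBA x = 3 * x /\ forall y, y < x -> ~ E B y x) \/
  (exists m, fBA x = 3 * m + 1 /\ m < x /\ E B m x).
Proof.
  unfold fBA. destruct (bex_01 x (fun y => PB x y)) as [H|H]; rewrite H; simpl ite.
  - left. split; auto. intros y Hy E. pose proof (proj1 (bex_spec0 x (fun y => PB x y)) H y Hy) as H0.
    assert (PB x y <> 0) by (apply PB_spec; split; auto; apply (Bu _ _ E)). lia.
  - right. exists (bmin x (fun y => PB x y)). split; auto.
    assert (Hl : bmin x (fun y => PB x y) < x).
    { apply bex_spec in H. destruct H as [j [Hj Hp]]. pose proof (bmin_spec_lt x (fun y => PB x y) j Hj Hp). lia. }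
    split; auto. apply bmin_found in Hl. apply PB_spec in Hl. tauto.
Qed.

Lemma fBA_emb : embedding B A fBA.
Proof.
  assert (Hinj : forall x y, univ B x -> univ B y -> fBA x = fBA y -> x = y).
  { intros x y Hx Hy E.
    destruct (fBA_cases x) as [[Ex _]|[m [Ex [Hm Em]]]]; destruct (fBA_cases y) as [[Ey _]|[m' [Ey [Hm' Em']]]]; try lia.
    assert (m = m') by lia. subst m'. destruct (Nat.eq_dec x y); auto. exfalso.
    apply (Bno3 m x y); auto using Bsym; lia. }
  split; [|split].
  - intros; simpl; auto.
  - exact Hinj.
  - intros x y Hx Hy. simpl. split.
    + intros Exy. destruct (Nat.eq_dec x y) as [<-|Hne]. apply EA_refl.
      assert (key : forall x y, x < y -> E B x y -> EA (fBA x) (fBA y)).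
      { clear x y Hx Hy Exy Hne. intros x y Hl Exy.
        destruct (fBA_cases y) as [[_ Hn]|[m [Ey [Hm Em]]]].
        - exfalso. apply (Hn x); auto.
        - assert (m = x).
          { destruct (Nat.eq_dec m x); auto. exfalso. apply (Bno3 y m x); auto using Bsym; lia. }
          subst m. destruct (fBA_cases x) as [[Ex _]|[m' [Ex' [Hm' Em']]]].
          + rewrite Ex, Ey. apply EA_pair.
          + exfalso. apply (Bno3 x m' y); auto using Bsym; lia. }
      destruct (Nat.lt_trichotomy x y) as [Hl|[Hl|Hl]]; [auto|lia|].
      apply EA_sym. apply key; auto using Bsym.
    + intros HEA. destruct (Nat.eq_dec x y) as [<-|Hne]. apply Brefl; auto.
      assert (Hf : fBA x <> fBA y) by (intros E; apply Hne; apply Hinj; auto).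
      destruct (fBA_cases x) as [[Ex _]|[m [Ex [Hm Em]]]]; destruct (fBA_cases y) as [[Ey _]|[m' [Ey [Hm' Em']]]];
      rewrite ?Ex, ?Ey in HEA, Hf; try (exfalso; unfold EA in HEA; dmall; lia).
      * assert (m' = x) by (unfold EA in HEA; dmall; lia). subst. auto.
      * assert (m = y) by (unfold EA in HEA; dmall; lia). subst. apply Bsym; auto.
Qed.


Definition TB (b : nat) : nat := bex b (fun a => andn (uB a) (andn (uB b) (eB a b))).
Lemma cf_TB : cf 1 (fun ys => TB (nth 0 ys 0)).
Proof. unfold TB. cfc. Qed.
#[local] Hint Resolve cf_TB : cfdb.

Lemma TB_spec b : TB b <> 0 <-> exists a, a < b /\ univ B a /\ univ B b /\ E B a b.
Proof.
  unfold TB. rewrite bex_spec'. split; intros [a [Ha H]]; exists a; split; auto;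
  rewrite ?andn_spec, ?uB_spec, ?eB_spec in *; tauto.
Qed.

Lemma pigeon (f : nat -> nat) : (forall x y, f x = f y -> x = y) -> forall N, exists k, k <= N /\ N <= f k.
Proof.
  intros Hi N. apply NNPP. intros Hn.
  assert (Hall : forall k, k <= N -> f k < N).
  { intros k Hk. destruct (Nat.lt_ge_cases (f k) N); auto. exfalso. apply Hn. exists k; auto. }
  assert (Hnd : NoDup (map f (seq 0 (S N)))).
  { apply FinFun.Injective_map_NoDup. intros x y; apply Hi. apply seq_NoDup. }
  assert (Hinc : incl (map f (seq 0 (S N))) (seq 0 N)).
  { intros u Hu. apply in_map_iff in Hu. destruct Hu as [k [<- Hk]]. apply in_seq in Hk.
    apply in_seq. specialize (Hall k ltac:(lia)). lia. }
  pose proof (NoDup_incl_length Hnd Hinc). rewrite length_map, !length_seq in H. lia.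
Qed.

Lemma TB_inf : forall c, exists b, c <= b /\ TB b <> 0.
Proof.
  intros c. destruct Hg as [Hgu [Hgi HgE]].
  destruct (pigeon (fun k => g (3 * k))) with (N := c) as [k [_ Hk]].
  { intros x y H. apply Hgi in H; simpl; auto. lia. }
  set (u := g (3 * k)). set (w := g (3 * k + 1)).
  assert (Euw : E B u w). { apply (HgE (3 * k) (3 * k + 1)); simpl; auto. apply EA_pair. }
  assert (Hne : u <> w). { intros H. apply Hgi in H; simpl; auto. lia. }
  destruct (Bu _ _ Euw) as [Hu Hw].
  destruct (Nat.lt_trichotomy u w) as [Hl|[Hl|Hl]]; [|lia|].
  - exists w. split. unfold u in *; lia. apply TB_spec. exists u. auto.
  - exists u. split. unfold u in *; lia. apply TB_spec. exists w. repeat split; auto. apply Bsym; auto.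
Qed.

Definition muT (c : nat) : nat :=
  epsilon (inhabits 0) (fun d => TB (c + d) <> 0 /\ forall d', d' < d -> TB (c + d') = 0).

Lemma muT_spec c : TB (c + muT c) <> 0 /\ forall d', d' < muT c -> TB (c + d') = 0.
Proof.
  unfold muT. apply (epsilon_spec (inhabits 0) (fun d => TB (c + d) <> 0 /\ forall d', d' < d -> TB (c + d') = 0)).
  destruct (TB_inf c) as [b [Hb HT]].
  destruct (least_ex (fun d => TB (c + d) <> 0)) as [d [Hd Hl]].
  { exists (b - c). replace (c + (b - c)) with b by lia. auto. }
  exists d. split; auto. intros d' Hd'. specialize (Hl d' Hd'). lia.
Qed.

Lemma cf_muT : cf 1 (fun ys => muT (nth 0 ys 0)).
Proof.
  apply (cf_mu 1 (fun ys => notn (TB (nth 1 ys 0 + nth 0 ys 0)))).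
  - cfc.
  - intros xs _. simpl. destruct (muT_spec (nth 0 xs 0)) as [H1 H2]. split.
    + unfold notn, ite. destruct (TB _); auto. lia.
    + intros j Hj. rewrite (H2 j Hj). unfold notn, ite. lia.
Qed.
#[local] Hint Resolve cf_muT : cfdb.

Fixpoint seqp (n : nat) : nat :=
  match n with 0 => muT 0 | S n => S (seqp n) + muT (S (seqp n)) end.

Lemma cf_seqp : cf 1 (fun ys => seqp (nth 0 ys 0)).
Proof.
  apply (cf_prim 0 (fun _ => muT 0) (fun ys => S (nth 1 ys 0) + muT (S (nth 1 ys 0)))).
  - apply cf_const.
  - cfc.
  - intros xs _; reflexivity.
  - intros n xs _; reflexivity.
Qed.
#[local] Hint Resolve cf_seqp : cfdb.

Lemma seqp_T n : TB (seqp n) <> 0.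
Proof. destruct n; simpl. exact (proj1 (muT_spec 0)). exact (proj1 (muT_spec (S (seqp n)))). Qed.

Lemma seqp_mono n m : n < m -> seqp n < seqp m.
Proof. induction 1; simpl; lia. Qed.

Lemma seqp_inj n m : seqp n = seqp m -> n = m.
Proof.
  intros H. destruct (Nat.lt_trichotomy n m) as [Hl|[Hl|Hl]]; auto; apply seqp_mono in Hl; lia.
Qed.

Definition ptnB (b : nat) : nat := bmin b (fun a => andn (uB a) (eB a b)).
Lemma cf_ptnB : cf 1 (fun ys => ptnB (nth 0 ys 0)).
Proof. unfold ptnB. cfc. Qed.
#[local] Hint Resolve cf_ptnB : cfdb.

Lemma ptnB_spec b : TB b <> 0 -> ptnB b < b /\ univ B (ptnB b) /\ E B (ptnB b) b.
Proof.
  intros H. apply TB_spec in H. destruct H as [a [Ha [Hua [Hub Eab]]]].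
  assert (Hp : andn (uB a) (eB a b) <> 0) by (rewrite andn_spec, uB_spec, eB_spec; auto).
  pose proof (bmin_spec_lt b (fun a => andn (uB a) (eB a b)) a Ha Hp) as Hle.
  assert (Hl : ptnB b < b) by (unfold ptnB; lia).
  split; auto. unfold ptnB in *. apply bmin_found in Hl. rewrite andn_spec, uB_spec, eB_spec in Hl. tauto.
Qed.

Definition bb (n : nat) : nat := seqp n.
Definition aa (n : nat) : nat := ptnB (seqp n).

Lemma aa_spec n : aa n < bb n /\ univ B (aa n) /\ univ B (bb n) /\ E B (aa n) (bb n).
Proof.
  unfold aa, bb. destruct (ptnB_spec _ (seqp_T n)) as [H1 [H2 H3]]. repeat split; auto.
  apply (Bu _ _ H3).
Qed.

Definition inP (n u : nat) : Prop := u = aa n \/ u = bb n.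

Lemma inP_E n u : inP n u -> univ B u /\ E B u (bb n).
Proof.
  destruct (aa_spec n) as [H1 [H2 [H3 H4]]]. intros [->| ->]; split; auto using Brefl.
Qed.

Lemma class_bb n w : E B w (bb n) -> inP n w.
Proof.
  intros Hw. destruct (aa_spec n) as [H1 [H2 [H3 H4]]].
  destruct (Nat.eq_dec w (aa n)); [left; auto|]. destruct (Nat.eq_dec w (bb n)); [right; auto|].
  exfalso. apply (Bno3 (bb n) (aa n) w); auto using Bsym; lia.
Qed.

Lemma cross n m u v : inP n u -> inP m v -> E B u v -> n = m.
Proof.
  intros Hu Hv Euv. apply inP_E in Hu. apply inP_E in Hv.
  assert (Enm : E B (bb m) (bb n)).
  { apply Btrans with v. apply Bsym; tauto. apply Btrans with u. apply Bsym; auto. tauto. }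
  assert (Emn' : E B (bb n) (bb m)) by (apply Bsym; auto).
  apply class_bb in Enm. apply class_bb in Emn'.
  destruct (aa_spec n) as [Hn _], (aa_spec m) as [Hm _].
  unfold inP in Enm, Emn'. destruct Enm as [E1|E1]; destruct Emn' as [E2|E2].
  - lia.
  - unfold bb in E2. apply seqp_inj in E2. auto.
  - unfold bb in E1. apply seqp_inj in E1. auto.
  - unfold bb in E1. apply seqp_inj in E1. auto.
Qed.

Definition hAB (v : nat) : nat :=
  ite (eqn (v mod 3) 0) (ptnB (seqp (2 * (v / 3))))
    (ite (eqn (v mod 3) 1) (seqp (2 * (v / 3))) (seqp (2 * (v / 3) + 1))).
Lemma cf_hAB : cf 1 (fun ys => hAB (nth 0 ys 0)).
Proof. unfold hAB. cfc. Qed.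

Lemma hAB_form v : (v mod 3 = 0 /\ hAB v = aa (2 * (v / 3))) \/ (v mod 3 = 1 /\ hAB v = bb (2 * (v / 3))) \/
  (v mod 3 = 2 /\ hAB v = bb (2 * (v / 3) + 1)).
Proof.
  unfold hAB, aa, bb. pose proof (Nat.mod_upper_bound v 3 ltac:(lia)).
  destruct (v mod 3) as [|[|[|r]]]; simpl; auto; lia.
Qed.

Lemma hAB_in v : inP (2 * (v / 3) + (v mod 3) / 2) (hAB v).
Proof.
  destruct (hAB_form v) as [[Hr Hv]|[[Hr Hv]|[Hr Hv]]]; rewrite Hv, Hr; unfold inP; simpl;
  replace (2 * (v / 3) + 0) with (2 * (v / 3)) by lia; auto.
Qed.

Lemma hAB_emb : embedding A B hAB.
Proof.
  assert (Hu : forall v, univ B (hAB v)) by (intros v; apply (inP_E _ _ (hAB_in v))).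
  assert (Hidx : forall v w, E B (hAB v) (hAB w) -> v / 3 = w / 3 /\ (v mod 3 < 2 <-> w mod 3 < 2)).
  { intros v w E. pose proof (cross _ _ _ _ (hAB_in v) (hAB_in w) E) as H.
    pose proof (Nat.mod_upper_bound v 3 ltac:(lia)). pose proof (Nat.mod_upper_bound w 3 ltac:(lia)).
    remember (v / 3) as kv. remember (w / 3) as kw.
    destruct (v mod 3) as [|[|[|]]], (w mod 3) as [|[|[|]]]; simpl in H; lia. }
  assert (Hinj : forall v w, hAB v = hAB w -> v = w).
  { intros v w E. destruct (Hidx v w) as [H1 H2]. rewrite E. apply Brefl; auto.
    destruct (aa_spec (2 * (v / 3))) as [Hlt _]. destruct (aa_spec (2 * (v / 3) + 1)) as [Hlt' _].
    destruct (hAB_form v) as [[Hr Hv]|[[Hr Hv]|[Hr Hv]]]; destruct (hAB_form w) as [[Hr' Hw]|[[Hr' Hw]|[Hr' Hw]]];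
    rewrite ?Hv, ?Hw, <- ?H1 in E; try lia;
    try (pose proof (Nat.div_mod_eq v 3); pose proof (Nat.div_mod_eq w 3); lia). }
  split; [|split].
  - intros v _; auto.
  - intros v w _ _; apply Hinj.
  - intros v w _ _. simpl. split.
    + intros [H1 H2]. destruct H2 as [<-|[H2 H3]]. apply Brefl; auto.
      destruct (aa_spec (2 * (v / 3))) as [_ [_ [_ Eab]]].
      destruct (hAB_form v) as [[Hr Hv]|[[Hr Hv]|[Hr Hv]]]; destruct (hAB_form w) as [[Hr' Hw]|[[Hr' Hw]|[Hr' Hw]]];
      rewrite ?Hv, ?Hw, <- ?H1; try lia; auto using Bsym, Brefl.
      * pose proof (aa_spec (2 * (v / 3))). apply Brefl; tauto.
      * pose proof (aa_spec (2 * (v / 3))). apply Brefl; tauto.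
    + intros E. destruct (Hidx v w E) as [H1 H2]. split; auto.
      pose proof (Nat.mod_upper_bound v 3 ltac:(lia)). pose proof (Nat.mod_upper_bound w 3 ltac:(lia)).
      destruct (Nat.lt_ge_cases (v mod 3) 2) as [Hl|Hl]. right; split; auto; apply H2; auto.
      left. pose proof (Nat.div_mod_eq v 3) as Dv. pose proof (Nat.div_mod_eq w 3) as Dw.
      assert (w mod 3 >= 2). { destruct (Nat.lt_ge_cases (w mod 3) 2) as [Hw|Hw]; auto. apply H2 in Hw. lia. }
      lia.
Qed.

End CBEC.

Lemma cf_fun f : cf 1 (fun ys => f (nth 0 ys 0)) -> computable_fun f.
Proof. intros [p Hp]. exists p. intros x. apply (Hp [x]). auto. Qed.

Lemma cbec_A : computably_bi_embeddably_categorical A.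
Proof.
  split. apply A_computable.
  intros B [[pU HU] [pE HE]] [[g Hg] [g' Hg']]. split.
  - exists (hAB B). split. apply cf_fun. eapply cf_hAB; eauto. eapply hAB_emb; eauto.
  - exists (fBA B). split. apply cf_fun. eapply cf_fBA; eauto. eapply fBA_emb; eauto.
Qed.

Theorem corollary2p7 :
  exists A : structure,
    is_equivalence_structure A /\ computable_structure A /\
    computably_bi_embeddably_categorical A /\ ~ computably_categorical A.
Proof.
  exists A. split. apply A_equiv. split. apply A_computable. split. apply cbec_A. apply not_cc.
Qed.
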